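(* Let $0<\lambda\le1$, $f\in\mathcal U(\lambda)$ and $a_2=f''(0)/2$. If $\mu$ is a complex number with $|\mu|\le 1-\lambda$ and $a_2+\mu\ne 0$, then $-\dfrac{1}{a_2+\mu}\notin f(\mathbb D)$.
   Context: $\mathbb D=\{z\in\mathbb C:|z|<1\}$. $\mathcal A$ is the class of functions $f$ analytic in $\mathbb D$ with $f(z)=z+\sum_{k\ge2}a_kz^k$. For $f\in\mathcal A$ with $f(z)\ne0$ for $z\in\mathbb D\setminus\{0\}$, set $U_f(z)=\left(\frac{z}{f(z)}\right)^2f'(z)-1$. For $0<\lambda\le1$, $\mathcal U(\lambda)$ is the class of such $f\in\mathcal A$ with $|U_f(z)|<\lambda$ for all $z\in\mathbb D$. *)

(* Defs.v *)
From Stdlib Require Import Reals.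
From Coquelicot Require Import Coquelicot.
Open Scope R_scope.

Definition in_disk (z : C) : Prop := Cmod z < 1.

Definition has_cderiv_on_disk (f f' : C -> C) : Prop :=
  forall z : C, in_disk z -> @is_derive C_AbsRing C_NormedModule f z (f' z).

Definition classA (f f' : C -> C) : Prop :=
  has_cderiv_on_disk f f' /\ f (RtoC 0) = RtoC 0 /\ f' (RtoC 0) = RtoC 1.

Definition U_f (f f' : C -> C) (z : C) : C :=
  Cminus (Cmult (Cpow (Cdiv z (f z)) 2) (f' z)) (RtoC 1).

(** Class U(lambda): f in A, f(z) <> 0 on D \ {0}, |U_f(z)| < lambda on D
    (at z = 0, U_f is understood by its removable-singularity value 0,
    so the bound is imposed for z <> 0; it holds trivially at 0). *)
Definition classU (lambda : R) (f f' : C -> C) : Prop :=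
  classA f f' /\
  (forall z : C, in_disk z -> z <> RtoC 0 -> f z <> RtoC 0) /\
  (forall z : C, in_disk z -> z <> RtoC 0 -> Cmod (U_f f f' z) < lambda).

(* Main.v *)
Require Import Defs.
From Stdlib Require Import Reals Lra.
From Coquelicot Require Import Coquelicot.
Open Scope R_scope.


Definition cd (F : C -> C) (z l : C) : Prop := forall eps, 0 < eps -> exists del, 0 < del /\
  forall w, Cmod (w - z) < del -> Cmod (F w - F z - l * (w - z))%C <= eps * Cmod (w - z).
Definition rd (p : R -> C) (t : R) (l : C) : Prop := forall eps, 0 < eps -> exists del, 0 < del /\
  forall s, Rabs (s - t) < del -> Cmod (p s - p t - RtoC (s - t) * l)%C <= eps * Rabs (s - t).
Definition ccont (F : C -> C) (z : C) : Prop := forall eps, 0 < eps -> exists del, 0 < del /\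
  forall w, Cmod (w - z) < del -> Cmod (F w - F z) < eps.
Definition rcont (p : R -> C) (t : R) : Prop := forall eps, 0 < eps -> exists del, 0 < del /\
  forall s, Rabs (s - t) < del -> Cmod (p s - p t) < eps.

Ltac absC := repeat match goal with |- context [Cmod ?x] => let c := fresh "c" in set (c := Cmod x) end.

Lemma scalC (r:R) (y:C): @scal R_AbsRing C_R_NormedModule r y = Cmult (RtoC r) y.
Proof. destruct y. apply injective_projections; simpl; unfold scal; simpl; unfold mult; simpl; ring. Qed.

Lemma normCR (x : C) : @norm R_AbsRing C_R_NormedModule x = Cmod x.
Proof. destruct x as [a b]. unfold norm; simpl. unfold prod_norm, Cmod. simpl. unfold norm; simpl. unfold abs; simpl.
 f_equal. rewrite !Rmult_1_r, <- !Rabs_mult, !Rabs_right; try reflexivity; apply Rle_ge; apply Rle_0_sqr. Qed.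

Lemma Cmod_minus_sym (a b : C) : Cmod (a - b) = Cmod (b - a).
Proof. replace (a - b)%C with (- (b - a))%C by ring. apply Cmod_opp. Qed.

Lemma Cmod_tri3 (a b c : C) : Cmod (a + b + c) <= Cmod a + Cmod b + Cmod c.
Proof. eapply Rle_trans; [apply Cmod_triangle|]. pose proof (Cmod_triangle a b). lra. Qed.

Lemma Cmod_sub (a b : C) : Cmod (a - b) <= Cmod a + Cmod b.
Proof. unfold Cminus. eapply Rle_trans; [apply Cmod_triangle|]. rewrite Cmod_opp. lra. Qed.

Lemma Cmod_rev_tri (a b : C) : Cmod a - Cmod b <= Cmod (a - b).
Proof. replace a with (a - b + b)%C at 1 by ring. pose proof (Cmod_triangle (a-b) b). lra. Qed.

Lemma sqrt2_lt_2 : sqrt 2 < 2.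
Proof.
  rewrite <- (sqrt_square 2) at 2 by lra. apply sqrt_lt_1; lra.
Qed.

Lemma is_derive_cd (F : C -> C) (z l : C) :
  @is_derive C_AbsRing C_NormedModule F z l -> cd F z l.
Proof.
  intros [_ Hd] eps Heps.
  specialize (Hd z (fun P H => H) (mkposreal eps Heps)).
  destruct Hd as [e He]. exists e. split; [apply cond_pos|].
  intros w Hw. specialize (He w Hw). simpl in He.
  replace (l * (w - z))%C with (scal (minus w z) l) by (unfold scal; simpl; unfold mult; simpl; unfold minus, plus, opp; simpl; ring).
  exact He.
Qed.

Lemma cd_is_derive (F : C -> C) (z l : C) :
  cd F z l -> @is_derive C_AbsRing C_NormedModule F z l.
Proof.
  intros H. split; [apply is_linear_scal_l|].
  intros x Hx eps.
  apply (@is_filter_lim_locally_unique C_AbsRing (AbsRing_NormedModule C_AbsRing)) in Hx. subst x.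
  destruct (H eps (cond_pos eps)) as [del [Hdel Hw]].
  exists (mkposreal del Hdel). intros w B.
  specialize (Hw w B).
  change (Cmod (minus (minus (F w) (F z)) (scal (minus w z) l)) <= eps * Cmod (minus w z)).
  replace (scal (minus w z) l) with (l * (w - z))%C by (unfold scal; simpl; unfold mult; simpl; unfold minus, plus, opp; simpl; ring).
  exact Hw.
Qed.

Lemma is_derive_cd' (F : C -> C) (z l : C) :
  @is_derive C_AbsRing (AbsRing_NormedModule C_AbsRing) F z l -> cd F z l.
Proof.
  intros [_ Hd] eps Heps.
  specialize (Hd z (fun P H => H) (mkposreal eps Heps)).
  destruct Hd as [e He]. exists e. split; [apply cond_pos|].
  intros w Hw. specialize (He w Hw). simpl in He.
  replace (l * (w - z))%C with (scal (minus w z) l) by (unfold scal; simpl; unfold mult; simpl; unfold minus, plus, opp; simpl; ring).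
  exact He.
Qed.

Lemma cd_is_derive' (F : C -> C) (z l : C) :
  cd F z l -> @is_derive C_AbsRing (AbsRing_NormedModule C_AbsRing) F z l.
Proof.
  intros H. split; [apply is_linear_scal_l|].
  intros x Hx eps.
  apply (@is_filter_lim_locally_unique C_AbsRing (AbsRing_NormedModule C_AbsRing)) in Hx. subst x.
  destruct (H eps (cond_pos eps)) as [del [Hdel Hw]].
  exists (mkposreal del Hdel). intros w B.
  specialize (Hw w B).
  change (Cmod (minus (minus (F w) (F z)) (scal (minus w z) l)) <= eps * Cmod (minus w z)).
  replace (scal (minus w z) l) with (l * (w - z))%C by (unfold scal; simpl; unfold mult; simpl; unfold minus, plus, opp; simpl; ring).
  exact Hw.
Qed.

Lemma rd_is_derive (p : R -> C) (t : R) (l : C) :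
  rd p t l -> @is_derive R_AbsRing C_R_NormedModule p t l.
Proof.
  intros H. split; [apply is_linear_scal_l|].
  intros x Hx eps.
  apply (@is_filter_lim_locally_unique R_AbsRing (AbsRing_NormedModule R_AbsRing)) in Hx. subst x.
  destruct (H eps (cond_pos eps)) as [del [Hdel Hw]].
  exists (mkposreal del Hdel). intros s B.
  change (Rabs (s - t) < del) in B.
  specialize (Hw s B).
  rewrite normCR, scalC. exact Hw.
Qed.

Lemma cont_of_rcont (p : R -> C) (t : R) : rcont p t -> continuous p t.
Proof.
  intros H. apply filterlim_locally. intros eps.
  destruct (H eps (cond_pos eps)) as [del [Hdel Hw]].
  exists (mkposreal del Hdel). intros s B. change (Rabs (s - t) < del) in B.
  apply C_NormedModule_mixin_compat1. apply Hw. exact B.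
Qed.

Lemma rcont_continuity_pt (p : R -> C) (t : R) : rcont p t -> continuity_pt (fun s => Cmod (p s)) t.
Proof.
  intros H eps Heps. destruct (H eps Heps) as [del [Hdel Hw]].
  exists del. split; [lra|]. intros s [_ Hs]. simpl in Hs. unfold R_dist in *.
  specialize (Hw s Hs). pose proof (Cmod_rev_tri (p s) (p t)). pose proof (Cmod_rev_tri (p t) (p s)).
  rewrite Cmod_minus_sym in H1. apply Rabs_def1; lra.
Qed.

Lemma cd_ccont F z l : cd F z l -> ccont F z.
Proof.
  intros H eps Heps. destruct (H 1 Rlt_0_1) as [del [Hdel Hw]].
  exists (Rmin del (eps / (Cmod l + 2))). split.
  { apply Rmin_pos; auto. apply Rdiv_lt_0_compat; auto. pose proof (Cmod_ge_0 l); lra. }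
  intros w Hw'. assert (Hd : Cmod (w - z) < del) by (eapply Rlt_le_trans; [exact Hw'| apply Rmin_l]).
  assert (He : Cmod (w - z) < eps / (Cmod l + 2)) by (eapply Rlt_le_trans; [exact Hw'| apply Rmin_r]).
  specialize (Hw w Hd).
  replace (F w - F z)%C with ((F w - F z - l * (w - z)) + l * (w - z))%C by ring.
  eapply Rle_lt_trans; [apply Cmod_triangle|]. rewrite Cmod_mult.
  pose proof (Cmod_ge_0 l). pose proof (Cmod_ge_0 (w - z)).
  assert (Cmod (w - z) * (Cmod l + 2) < eps).
  { apply (Rmult_lt_compat_r (Cmod l + 2)) in He; [|lra].
    unfold Rdiv in He. rewrite Rmult_assoc, Rinv_l in He; lra. }
  nra.
Qed.

Lemma rd_rcont p t l : rd p t l -> rcont p t.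
Proof.
  intros H eps Heps. destruct (H 1 Rlt_0_1) as [del [Hdel Hw]].
  exists (Rmin del (eps / (Cmod l + 2))). split.
  { apply Rmin_pos; auto. apply Rdiv_lt_0_compat; auto. pose proof (Cmod_ge_0 l); lra. }
  intros s Hs'. assert (Hd : Rabs (s - t) < del) by (eapply Rlt_le_trans; [exact Hs'| apply Rmin_l]).
  assert (He : Rabs (s - t) < eps / (Cmod l + 2)) by (eapply Rlt_le_trans; [exact Hs'| apply Rmin_r]).
  specialize (Hw s Hd).
  replace (p s - p t)%C with ((p s - p t - RtoC (s - t) * l) + RtoC (s - t) * l)%C by ring.
  eapply Rle_lt_trans; [apply Cmod_triangle|]. rewrite Cmod_mult, Cmod_R.
  pose proof (Cmod_ge_0 l). pose proof (Rabs_pos (s - t)).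
  assert (Rabs (s - t) * (Cmod l + 2) < eps).
  { apply (Rmult_lt_compat_r (Cmod l + 2)) in He; [|lra].
    unfold Rdiv in He. rewrite Rmult_assoc, Rinv_l in He; lra. }
  nra.
Qed.




Lemma cd_ext_loc F G z l r : 0 < r -> (forall w, Cmod (w - z) < r -> F w = G w) -> cd F z l -> cd G z l.
Proof.
  intros Hr HFG H eps Heps. destruct (H eps Heps) as [del [Hdel Hw]].
  exists (Rmin del r). split; [apply Rmin_pos; auto|]. intros w Hw'.
  assert (Hz : F z = G z) by (apply HFG; replace (z - z)%C with (RtoC 0) by ring; rewrite Cmod_0; auto).
  rewrite <- Hz, <- HFG by (eapply Rlt_le_trans; [exact Hw'|apply Rmin_r]).
  apply Hw. eapply Rlt_le_trans; [exact Hw'|apply Rmin_l].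
Qed.

Lemma cd_unique F z l1 l2 : cd F z l1 -> cd F z l2 -> l1 = l2.
Proof.
  intros H1 H2. destruct (Ceq_dec l1 l2) as [E|E]; auto. exfalso.
  set (d := Cmod (l1 - l2)). assert (Hd : 0 < d) by (apply Cmod_gt_0; intro X; apply E; 
    replace l1 with (l1 - l2 + l2)%C by ring; rewrite X; ring).
  destruct (H1 (d/3) ltac:(lra)) as [e1 [He1 W1]]. destruct (H2 (d/3) ltac:(lra)) as [e2 [He2 W2]].
  set (h := Rmin e1 e2 / 2). assert (Hh : 0 < h) by (unfold h; pose proof (Rmin_pos e1 e2 He1 He2); lra).
  assert (Hh1 : h < e1) by (unfold h; pose proof (Rmin_l e1 e2); pose proof (Rmin_pos e1 e2 He1 He2); lra).
  assert (Hh2 : h < e2) by (unfold h; pose proof (Rmin_r e1 e2); pose proof (Rmin_pos e1 e2 He1 He2); lra).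
  set (w := (z + RtoC h)%C). assert (Ew : Cmod (w - z) = h).
  { unfold w. replace (z + h - z)%C with (RtoC h) by ring. rewrite Cmod_R, Rabs_right; lra. }
  specialize (W1 w ltac:(lra)). specialize (W2 w ltac:(lra)). rewrite Ew in W1, W2.
  assert (Cmod ((l1 - l2) * (w - z)) <= 2 * (d/3) * h).
  { replace ((l1 - l2) * (w - z))%C with ((F w - F z - l2 * (w - z)) - (F w - F z - l1 * (w - z)))%C by ring.
    eapply Rle_trans; [apply Cmod_sub|]. lra. }
  rewrite Cmod_mult, Ew in H. fold d in H. nra.
Qed.

Lemma cd_iff F z l : cd F z l <-> @is_derive C_AbsRing C_NormedModule F z l.
Proof. split; [apply cd_is_derive|apply is_derive_cd]. Qed.

Lemma cd_iff' F z l : cd F z l <-> @is_derive C_AbsRing (AbsRing_NormedModule C_AbsRing) F z l.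
Proof. split; [apply cd_is_derive'|apply is_derive_cd']. Qed.

Lemma cd_const (c z : C) : cd (fun _ => c) z (RtoC 0).
Proof. apply cd_iff. apply (@is_derive_const C_AbsRing C_NormedModule). Qed.

Lemma cd_id (z : C) : cd (fun w => w) z (RtoC 1).
Proof. apply cd_iff'. assert (E: @one (AbsRing.Ring C_AbsRing) = RtoC 1) by reflexivity. rewrite <- E. exact (@is_derive_id C_AbsRing z). Qed.

Lemma cd_plus F G z a b : cd F z a -> cd G z b -> cd (fun w => F w + G w)%C z (a + b)%C.
Proof. rewrite !cd_iff. intros. apply (@is_derive_plus C_AbsRing C_NormedModule); auto. Qed.

Lemma cd_opp F z a : cd F z a -> cd (fun w => - F w)%C z (- a)%C.
Proof. rewrite !cd_iff. intros. apply (@is_derive_opp C_AbsRing C_NormedModule); auto. Qed.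

Lemma cd_minus F G z a b : cd F z a -> cd G z b -> cd (fun w => F w - G w)%C z (a - b)%C.
Proof. rewrite !cd_iff. intros. apply (@is_derive_minus C_AbsRing C_NormedModule); auto. Qed.

Lemma cd_mult F G z a b : cd F z a -> cd G z b -> cd (fun w => F w * G w)%C z (a * G z + F z * b)%C.
Proof. rewrite !cd_iff'. intros. apply (@is_derive_mult C_AbsRing); auto. intros; apply Cmult_comm. Qed.

Lemma cd_comp G F z a b : cd G (F z) a -> cd F z b -> cd (fun w => G (F w)) z (b * a)%C.
Proof. rewrite !cd_iff'. intros. apply (@is_derive_comp C_AbsRing (AbsRing_NormedModule C_AbsRing)); auto. Qed.

Lemma cd_scal (c : C) F z a : cd F z a -> cd (fun w => c * F w)%C z (c * a)%C.
Proof. intros H. eapply cd_ext_loc with (r := 1); [lra| intros; reflexivity|].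
  replace (c * a)%C with (0 * F z + c * a)%C by ring. apply cd_mult; auto. apply cd_const. Qed.

Lemma cd_Cinv (z : C) : z <> RtoC 0 -> cd (fun w => / w)%C z (- / (z * z))%C.
Proof.
  intros Hz eps Heps. set (m := Cmod z). assert (Hm : 0 < m) by (apply Cmod_gt_0; auto).
  exists (Rmin (m/2) (eps * m * m * m / 2)). split.
  { apply Rmin_pos; [lra|]. apply Rdiv_lt_0_compat; [|lra]. repeat apply Rmult_lt_0_compat; auto. }
  intros w Hw. assert (Hw1 : Cmod (w - z) < m/2) by (eapply Rlt_le_trans; [exact Hw|apply Rmin_l]).
  assert (Hw2 : Cmod (w - z) < eps * m * m * m / 2) by (eapply Rlt_le_trans; [exact Hw|apply Rmin_r]).
  assert (Hwm : m / 2 <= Cmod w).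
  { pose proof (Cmod_rev_tri z w). rewrite Cmod_minus_sym in H. fold m in H. lra. }
  assert (Hw0 : w <> RtoC 0) by (intro X; rewrite X, Cmod_0 in Hwm; lra).
  replace (/ w - / z - - / (z * z) * (w - z))%C with ((w - z) * (w - z) / (z * z * w))%C by (field; auto).
  rewrite Cmod_div by (repeat apply Cmult_neq_0; auto). rewrite !Cmod_mult. fold m.
  pose proof (Cmod_ge_0 (w - z)).
  apply Rle_div_l. { apply Rmult_lt_0_compat; [nra|lra]. }
  assert (0 <= (eps * (m*m)) * (Cmod w - m/2)) by (apply Rmult_le_pos; nra).
  assert (Cmod (w - z) <= eps * m * m * Cmod w) by nra.
  nra.
Qed.

Lemma cd_inv F z a : F z <> RtoC 0 -> cd F z a -> cd (fun w => / F w)%C z (- a / (F z * F z))%C.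
Proof.
  intros Hz H. replace (- a / (F z * F z))%C with (a * (- / (F z * F z)))%C by (field; auto).
  apply (cd_comp (fun w => / w)%C F z); auto. apply cd_Cinv; auto.
Qed.

Lemma cd_pow F z a (n : nat) : cd F z a -> cd (fun w => F w ^ n)%C z (INR n * F z ^ (pred n) * a)%C.
Proof.
  intros H. induction n.
  - change (cd (fun _ => RtoC 1) z (INR 0 * F z ^ (pred 0) * a)%C).
    replace (INR 0 * F z ^ (pred 0) * a)%C with (RtoC 0) by (simpl; ring). apply cd_const.
  - change (cd (fun w => F w * F w ^ n)%C z (INR (S n) * F z ^ (pred (S n)) * a)%C).
    replace (INR (S n) * F z ^ (pred (S n)) * a)%C with (a * F z ^ n + F z * (INR n * F z ^ Nat.pred n * a))%C.
    + apply cd_mult; auto.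
    + rewrite S_INR, RtoC_plus. destruct n.
      * simpl. ring.
      * change (Nat.pred (S (S n))) with (S n). change (Nat.pred (S n)) with n.
        change ((F z) ^ (S n))%C with (F z * F z ^ n)%C. ring.
Qed.

Lemma rd_ext p q t l : (forall s, p s = q s) -> rd p t l -> rd q t l.
Proof. intros E H eps Heps. destruct (H eps Heps) as [d [Hd W]]. exists d; split; auto. intros; rewrite <- !E; auto. Qed.

Lemma rd_comp (G : C -> C) (p : R -> C) t a b : cd G (p t) a -> rd p t b -> rd (fun s => G (p s)) t (a * b)%C.
Proof.
  intros HG Hp eps Heps.
  set (K := Cmod b + 1). set (A := Cmod a + 1).
  assert (HK : 0 < K) by (unfold K; pose proof (Cmod_ge_0 b); lra).
  assert (HA : 0 < A) by (unfold A; pose proof (Cmod_ge_0 a); lra).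
  destruct (Hp 1 Rlt_0_1) as [d0 [Hd0 W0]].
  destruct (HG (eps / (2 * K)) ltac:(apply Rdiv_lt_0_compat; lra)) as [d1 [Hd1 W1]].
  destruct (Hp (eps / (2 * A)) ltac:(apply Rdiv_lt_0_compat; lra)) as [d2 [Hd2 W2]].
  exists (Rmin (Rmin d0 d2) (d1 / K)). split.
  { repeat apply Rmin_pos; auto. apply Rdiv_lt_0_compat; lra. }
  intros s Hs.
  assert (Hs0 : Rabs (s - t) < d0) by (eapply Rlt_le_trans; [exact Hs|]; eapply Rle_trans; apply Rmin_l).
  assert (Hs2 : Rabs (s - t) < d2) by (eapply Rlt_le_trans; [exact Hs|]; eapply Rle_trans; [apply Rmin_l|apply Rmin_r]).
  assert (Hs1 : Rabs (s - t) < d1 / K) by (eapply Rlt_le_trans; [exact Hs|apply Rmin_r]).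
  specialize (W0 s Hs0). specialize (W2 s Hs2).
  pose proof (Rabs_pos (s - t)).
  assert (Hp1 : Cmod (p s - p t) <= K * Rabs (s - t)).
  { replace (p s - p t)%C with ((p s - p t - RtoC (s - t) * b) + RtoC (s - t) * b)%C by ring.
    eapply Rle_trans; [apply Cmod_triangle|]. rewrite Cmod_mult, Cmod_R. unfold K. nra. }
  assert (Hp2 : Cmod (p s - p t) < d1).
  { eapply Rle_lt_trans; [exact Hp1|]. apply (Rmult_lt_compat_l K) in Hs1; auto.
    unfold Rdiv in Hs1. rewrite (Rmult_comm d1), <- Rmult_assoc, Rinv_r in Hs1; lra. }
  specialize (W1 (p s) Hp2).
  replace (G (p s) - G (p t) - RtoC (s - t) * (a * b))%C with
    ((G (p s) - G (p t) - a * (p s - p t)) + a * (p s - p t - RtoC (s - t) * b))%C by ring.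
  eapply Rle_trans; [apply Cmod_triangle|]. rewrite Cmod_mult.
  assert (E1 : eps / (2 * K) * Cmod (p s - p t) <= eps / 2 * Rabs (s - t)).
  { apply Rle_trans with (eps / (2 * K) * (K * Rabs (s - t))).
    - apply Rmult_le_compat_l; auto. apply Rlt_le, Rdiv_lt_0_compat; lra.
    - right. field. lra. }
  assert (E2 : Cmod a * Cmod (p s - p t - RtoC (s - t) * b) <= eps / 2 * Rabs (s - t)).
  { apply Rle_trans with (A * (eps / (2 * A) * Rabs (s - t))).
    - apply Rmult_le_compat; auto using Cmod_ge_0. unfold A; lra.
    - right. field. lra. }
  lra.
Qed.

Lemma rd_plus p q t a b : rd p t a -> rd q t b -> rd (fun s => p s + q s)%C t (a + b)%C.
Proof.
  intros Hp Hq eps Heps.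
  destruct (Hp (eps/2) ltac:(lra)) as [d1 [Hd1 W1]]. destruct (Hq (eps/2) ltac:(lra)) as [d2 [Hd2 W2]].
  exists (Rmin d1 d2). split; [apply Rmin_pos; auto|]. intros s Hs.
  specialize (W1 s ltac:(eapply Rlt_le_trans; [exact Hs|apply Rmin_l])).
  specialize (W2 s ltac:(eapply Rlt_le_trans; [exact Hs|apply Rmin_r])).
  replace (p s + q s - (p t + q t) - RtoC (s - t) * (a + b))%C with
    ((p s - p t - RtoC (s - t) * a) + (q s - q t - RtoC (s - t) * b))%C by ring.
  eapply Rle_trans; [apply Cmod_triangle|]. lra.
Qed.

Lemma rd_const (c : C) t : rd (fun _ => c) t (RtoC 0).
Proof. intros eps Heps. exists 1; split; [lra|]. intros s _.
  replace (c - c - RtoC (s - t) * 0)%C with (RtoC 0) by ring. rewrite Cmod_0. pose proof (Rabs_pos (s-t)). nra. Qed.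

Lemma rd_id t : rd (fun s => RtoC s) t (RtoC 1).
Proof. intros eps Heps. exists 1; split; [lra|]. intros s _.
  replace (RtoC s - RtoC t - RtoC (s - t) * 1)%C with (RtoC 0) by (rewrite RtoC_minus; ring). rewrite Cmod_0. pose proof (Rabs_pos (s-t)). nra. Qed.


Lemma rd_scal (c : C) p t a : rd p t a -> rd (fun s => c * p s)%C t (c * a)%C.
Proof. intros H.
  assert (H0 : cd (fun w => c * w)%C (p t) (c*1)%C) by (apply cd_scal, cd_id). rewrite Cmult_1_r in H0.
  exact (rd_comp (fun w => c * w)%C p t c a H0 H).
Qed.

Lemma rd_minus p q t a b : rd p t a -> rd q t b -> rd (fun s => p s - q s)%C t (a - b)%C.
Proof. intros Hp Hq. apply rd_plus; auto. apply rd_ext with (fun s => (-1) * q s)%C; [intros; ring|].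
  replace (- b)%C with (-1 * b)%C by ring. apply rd_scal; auto. Qed.

Lemma rd_of_real (f : R -> R) (g : R -> R) t a b :
  derivable_pt_lim f t a -> derivable_pt_lim g t b -> rd (fun s => (f s, g s)) t (a, b).
Proof.
  intros Hf Hg eps Heps.
  destruct (Hf (eps/2) ltac:(lra)) as [d1 W1]. destruct (Hg (eps/2) ltac:(lra)) as [d2 W2].
  exists (Rmin d1 d2). split; [apply Rmin_pos; apply cond_pos|]. intros s Hs.
  destruct (Req_dec s t) as [E|E].
  { subst. replace ((f t, g t) - (f t, g t) - RtoC (t - t) * (a, b))%C with (RtoC 0).
    rewrite Cmod_0, Rminus_eq_0, Rabs_R0; lra. apply injective_projections; simpl; ring. }
  assert (Hh : s - t <> 0) by lra.
  specialize (W1 (s - t) Hh ltac:(eapply Rlt_le_trans; [exact Hs|apply Rmin_l])).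
  specialize (W2 (s - t) Hh ltac:(eapply Rlt_le_trans; [exact Hs|apply Rmin_r])).
  replace (t + (s - t)) with s in W1, W2 by ring.
  assert (A1 : Rabs (f s - f t - (s - t) * a) <= eps / 2 * Rabs (s - t)).
  { replace (f s - f t - (s - t) * a) with (((f s - f t) / (s - t) - a) * (s - t)) by (field; auto).
    rewrite Rabs_mult. apply Rmult_le_compat_r; [apply Rabs_pos|lra]. }
  assert (A2 : Rabs (g s - g t - (s - t) * b) <= eps / 2 * Rabs (s - t)).
  { replace (g s - g t - (s - t) * b) with (((g s - g t) / (s - t) - b) * (s - t)) by (field; auto).
    rewrite Rabs_mult. apply Rmult_le_compat_r; [apply Rabs_pos|lra]. }
  replace ((f s, g s) - (f t, g t) - RtoC (s - t) * (a, b))%C with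
    (RtoC (f s - f t - (s - t) * a) + Ci * RtoC (g s - g t - (s - t) * b))%C
    by (apply injective_projections; simpl; ring).
  eapply Rle_trans; [apply Cmod_triangle|]. rewrite Cmod_mult, Cmod_Ci, !Cmod_R. lra.
Qed.

Definition E (t : R) : C := (cos t, sin t).

Lemma rd_E t : rd E t (Ci * E t)%C.
Proof.
  replace (Ci * E t)%C with (- sin t, cos t) by (unfold E; apply injective_projections; simpl; ring).
  apply rd_of_real; [apply derivable_pt_lim_cos|apply derivable_pt_lim_sin].
Qed.

Lemma Cmod_E t : Cmod (E t) = 1.
Proof. unfold E, Cmod; simpl. rewrite !Rmult_1_r. pose proof (sin2_cos2 t). unfold Rsqr in H. rewrite Rplus_comm, H. apply sqrt_1. Qed.

Lemma rcont_comp (G : C -> C) p t : ccont G (p t) -> rcont p t -> rcont (fun s => G (p s)) t.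
Proof.
  intros HG Hp eps Heps. destruct (HG eps Heps) as [d1 [Hd1 W1]]. destruct (Hp d1 Hd1) as [d2 [Hd2 W2]].
  exists d2; split; auto.
Qed.

Lemma rcont_plus p q t : rcont p t -> rcont q t -> rcont (fun s => p s + q s)%C t.
Proof.
  intros Hp Hq eps Heps. destruct (Hp (eps/2) ltac:(lra)) as [d1 [Hd1 W1]]. destruct (Hq (eps/2) ltac:(lra)) as [d2 [Hd2 W2]].
  exists (Rmin d1 d2). split; [apply Rmin_pos; auto|]. intros s Hs.
  specialize (W1 s ltac:(eapply Rlt_le_trans; [exact Hs|apply Rmin_l])).
  specialize (W2 s ltac:(eapply Rlt_le_trans; [exact Hs|apply Rmin_r])).
  replace (p s + q s - (p t + q t))%C with ((p s - p t) + (q s - q t))%C by ring.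
  eapply Rle_lt_trans; [apply Cmod_triangle|]. lra.
Qed.

Lemma rcont_mult p q t : rcont p t -> rcont q t -> rcont (fun s => p s * q s)%C t.
Proof.
  intros Hp Hq eps Heps.
  set (A := Cmod (p t) + 1). set (B := Cmod (q t) + 1).
  assert (HA : 0 < A) by (unfold A; pose proof (Cmod_ge_0 (p t)); lra).
  assert (HB : 0 < B) by (unfold B; pose proof (Cmod_ge_0 (q t)); lra).
  set (e := Rmin 1 (eps / (A + B))).
  assert (He : 0 < e) by (apply Rmin_pos; [lra|apply Rdiv_lt_0_compat; lra]).
  assert (He1 : e <= 1) by apply Rmin_l.
  assert (He2 : e * (A + B) <= eps).
  { unfold e. apply Rle_trans with (eps / (A + B) * (A + B)).
    - apply Rmult_le_compat_r; [lra|apply Rmin_r].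
    - right; field; lra. }
  destruct (Hp e He) as [d1 [Hd1 W1]]. destruct (Hq e He) as [d2 [Hd2 W2]].
  exists (Rmin d1 d2). split; [apply Rmin_pos; auto|]. intros s Hs.
  specialize (W1 s ltac:(eapply Rlt_le_trans; [exact Hs|apply Rmin_l])).
  specialize (W2 s ltac:(eapply Rlt_le_trans; [exact Hs|apply Rmin_r])).
  replace (p s * q s - p t * q t)%C with ((p s - p t) * (q s - q t) + (p s - p t) * q t + p t * (q s - q t))%C by ring.
  eapply Rle_lt_trans; [apply Cmod_tri3|]. rewrite !Cmod_mult.
  pose proof (Cmod_ge_0 (p s - p t)). pose proof (Cmod_ge_0 (q s - q t)).
  pose proof (Cmod_ge_0 (p t)). pose proof (Cmod_ge_0 (q t)).
  assert (Cmod (p s - p t) * Cmod (q s - q t) <= e * 1) by (apply Rmult_le_compat; lra).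
  assert (Cmod (p s - p t) * Cmod (q t) <= e * Cmod (q t)) by (apply Rmult_le_compat_r; lra).
  assert (Cmod (p t) * Cmod (q s - q t) < Cmod (p t) * e + e) by nra.
  unfold A, B in He2. nra.
Qed.

Lemma rcont_const (c : C) t : rcont (fun _ => c) t.
Proof. intros eps Heps. exists 1. split; [lra|]. intros. replace (c - c)%C with (RtoC 0) by ring. rewrite Cmod_0; lra. Qed.

Lemma ex_RInt_rcont (p : R -> C) a b : a <= b -> (forall t, a <= t <= b -> rcont p t) ->
  @ex_RInt C_R_NormedModule p a b.
Proof.
  intros Hab H. apply (@ex_RInt_continuous C_R_CompleteNormedModule).
  intros z Hz. rewrite Rmin_left, Rmax_right in Hz by lra. apply cont_of_rcont. auto.
Qed.

Lemma real_deriv_eps (f : R -> R) t l :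
  (forall eps, 0 < eps -> exists del, 0 < del /\ forall s, Rabs (s - t) < del -> Rabs (f s - f t - (s - t) * l) <= eps * Rabs (s - t))
  -> is_derive f t l.
Proof.
  intros H. apply is_derive_Reals. intros eps Heps.
  destruct (H (eps/2) ltac:(lra)) as [d [Hd W]]. exists (mkposreal d Hd). intros h Hh Hhd. simpl in Hhd.
  specialize (W (t + h) ltac:(replace (t + h - t) with h by ring; auto)).
  replace (t + h - t) with h in W by ring.
  replace ((f (t + h) - f t) / h - l) with ((f (t + h) - f t - h * l) / h) by (field; auto).
  unfold Rdiv. rewrite Rabs_mult, Rabs_inv. apply Rle_lt_trans with (eps / 2 * Rabs h * / Rabs h).
  - apply Rmult_le_compat_r; auto. left. apply Rinv_0_lt_compat, Rabs_pos_lt; auto.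
  - field_simplify; [|apply Rabs_no_R0; auto]. lra.
Qed.

Lemma mvi (p dp : R -> C) a b M : a <= b -> (forall t, a <= t <= b -> rd p t (dp t)) ->
  (forall t, a <= t <= b -> Cmod (dp t) <= M) -> Cmod (p b - p a) <= M * (b - a).
Proof.
  intros Hab Hd HM.
  assert (HM0 : 0 <= M) by (eapply Rle_trans; [apply Cmod_ge_0|apply (HM a)]; lra).
  set (c := (p b - p a)%C).
  set (psi := fun t => Re (Cconj c * p t)%C).
  assert (Hpsi : forall t, a <= t <= b -> is_derive psi t (Re (Cconj c * dp t)%C)).
  { intros t Ht. apply real_deriv_eps. intros eps Heps.
    destruct (Hd t Ht (eps / (Cmod c + 1))) as [d [Hd0 W]].
    { apply Rdiv_lt_0_compat; auto. pose proof (Cmod_ge_0 c); lra. }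
    exists d; split; auto. intros s Hs. specialize (W s Hs).
    unfold psi. replace (Re (Cconj c * p s) - Re (Cconj c * p t) - (s - t) * Re (Cconj c * dp t)) with
      (Re (Cconj c * (p s - p t - RtoC (s - t) * dp t))%C) by (simpl; ring).
    eapply Rle_trans; [apply re_le_Cmod|]. rewrite Cmod_mult, Cmod_conj.
    apply Rle_trans with (Cmod c * (eps / (Cmod c + 1) * Rabs (s - t))).
    - apply Rmult_le_compat_l; auto using Cmod_ge_0.
    - pose proof (Cmod_ge_0 c). pose proof (Rabs_pos (s - t)).
      apply Rle_trans with ((Cmod c / (Cmod c + 1)) * (eps * Rabs (s - t))); [right; field; lra|].
      rewrite <- (Rmult_1_l (eps * Rabs (s - t))) at 2. apply Rmult_le_compat_r; [nra|].
      apply Rle_div_l; lra. }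
  destruct (MVT_gen psi a b (fun t => Re (Cconj c * dp t)%C)) as [x [Hx Hmvt]].
  - intros x Hx. rewrite Rmin_left, Rmax_right in Hx by lra. apply Hpsi; lra.
  - intros x Hx. rewrite Rmin_left, Rmax_right in Hx by lra.
    apply continuity_pt_filterlim. apply (@ex_derive_continuous R_AbsRing R_NormedModule). eexists. apply Hpsi; auto.
  - rewrite Rmin_left, Rmax_right in Hx by lra.
    assert (Ec : psi b - psi a = Cmod c ^ 2).
    { unfold psi. rewrite Cmod2_alt. unfold c. destruct (p b) as [u v], (p a) as [u1 v1]. simpl. ring. }
    rewrite Ec in Hmvt.
    assert (Cmod c ^ 2 <= Cmod c * M * (b - a)).
    { rewrite Hmvt. apply Rmult_le_compat_r; [lra|]. eapply Rle_trans; [apply Rle_abs|].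
      eapply Rle_trans; [apply re_le_Cmod|]. rewrite Cmod_mult, Cmod_conj. apply Rmult_le_compat_l; auto using Cmod_ge_0. }
    pose proof (Cmod_ge_0 c). fold c.
    destruct (Req_dec (Cmod c) 0) as [Z|Z]; [rewrite Z; nra|]. nra.
Qed.


Lemma is_RInt_Cmult (c : C) (p : R -> C) a b (l : C) :
  @is_RInt C_R_NormedModule p a b l -> @is_RInt C_R_NormedModule (fun t => c * p t)%C a b (c * l)%C.
Proof.
  intros H.
  pose proof (@is_RInt_fct_extend_fst R_NormedModule R_NormedModule p a b l H) as H1.
  pose proof (@is_RInt_fct_extend_snd R_NormedModule R_NormedModule p a b l H) as H2.
  destruct c as [cr ci].
  apply (@is_RInt_fct_extend_pair R_NormedModule R_NormedModule).
  - simpl. apply (@is_RInt_minus R_NormedModule); apply (@is_RInt_scal R_NormedModule); auto.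
  - simpl. apply (@is_RInt_plus R_NormedModule); apply (@is_RInt_scal R_NormedModule); auto.
Qed.

Definition Int (p : R -> C) (a b : R) : C := @RInt C_R_CompleteNormedModule p a b.
Definition exI (p : R -> C) (a b : R) : Prop := @ex_RInt C_R_NormedModule p a b.

Lemma Int_correct p a b : exI p a b -> @is_RInt C_R_NormedModule p a b (Int p a b).
Proof. intros H. apply (@RInt_correct C_R_CompleteNormedModule). exact H. Qed.

Lemma Int_unique p a b l : @is_RInt C_R_NormedModule p a b l -> Int p a b = l.
Proof. intros H. apply (@is_RInt_unique C_R_CompleteNormedModule). exact H. Qed.

Lemma exI_rcont p a b : a <= b -> (forall t, a <= t <= b -> rcont p t) -> exI p a b.
Proof. apply ex_RInt_rcont. Qed.

Lemma Int_plus p q a b : exI p a b -> exI q a b -> Int (fun t => p t + q t)%C a b = (Int p a b + Int q a b)%C.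
Proof. intros Hp Hq. apply Int_unique. apply (@is_RInt_plus C_R_NormedModule); apply Int_correct; auto. Qed.

Lemma Int_minus p q a b : exI p a b -> exI q a b -> Int (fun t => p t - q t)%C a b = (Int p a b - Int q a b)%C.
Proof. intros Hp Hq. apply Int_unique. apply (@is_RInt_minus C_R_NormedModule); apply Int_correct; auto. Qed.

Lemma Int_Cmult c p a b : exI p a b -> Int (fun t => c * p t)%C a b = (c * Int p a b)%C.
Proof. intros Hp. apply Int_unique. apply is_RInt_Cmult. apply Int_correct; auto. Qed.

Lemma exI_Cmult c p a b : exI p a b -> exI (fun t => c * p t)%C a b.
Proof. intros Hp. eexists. apply is_RInt_Cmult. apply Int_correct; auto. Qed.

Lemma exI_plus p q a b : exI p a b -> exI q a b -> exI (fun t => p t + q t)%C a b.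
Proof. intros Hp Hq. eexists. apply (@is_RInt_plus C_R_NormedModule); apply Int_correct; auto. Qed.

Lemma exI_minus p q a b : exI p a b -> exI q a b -> exI (fun t => p t - q t)%C a b.
Proof. intros Hp Hq. eexists. apply (@is_RInt_minus C_R_NormedModule); apply Int_correct; auto. Qed.

Lemma Int_ext p q a b : a <= b -> (forall t, a <= t <= b -> p t = q t) -> Int p a b = Int q a b.
Proof. intros Hab H. unfold Int. apply (@RInt_ext C_R_CompleteNormedModule). intros x Hx. rewrite Rmin_left, Rmax_right in Hx by lra. apply H; lra. Qed.

Lemma exI_ext p q a b : a <= b -> (forall t, a <= t <= b -> p t = q t) -> exI p a b -> exI q a b.
Proof. intros Hab H [l Hl]. exists l. eapply (@is_RInt_ext C_R_NormedModule); [|exact Hl].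
  intros x Hx. rewrite Rmin_left, Rmax_right in Hx by lra. apply H; lra. Qed.

Lemma Int_Chasles p a b c : exI p a b -> exI p b c -> (Int p a b + Int p b c)%C = Int p a c.
Proof. intros H1 H2. unfold Int. apply (@RInt_Chasles C_R_CompleteNormedModule); auto. Qed.

Lemma Int_bound p a b M : a <= b -> exI p a b -> (forall t, a <= t <= b -> Cmod (p t) <= M) -> Cmod (Int p a b) <= (b - a) * M.
Proof.
  intros Hab Hp HM. rewrite <- normCR. apply (@norm_RInt_le_const C_R_NormedModule p a b); auto.
  - intros; rewrite normCR; auto.
  - apply Int_correct; auto.
Qed.

Lemma Int_FTC (q p : R -> C) a b : a <= b -> (forall t, a <= t <= b -> rd q t (p t)) ->
  (forall t, a <= t <= b -> rcont p t) -> Int p a b = (q b - q a)%C.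
Proof.
  intros Hab Hd Hc. apply Int_unique.
  apply (@is_RInt_derive C_R_CompleteNormedModule q p a b).
  - intros x Hx. rewrite Rmin_left, Rmax_right in Hx by lra. apply rd_is_derive; auto.
  - intros x Hx. rewrite Rmin_left, Rmax_right in Hx by lra. apply cont_of_rcont; auto.
Qed.

Lemma exI_sub p a b c d : a <= c -> c <= d -> d <= b -> exI p a b -> exI p c d.
Proof.
  intros H1 H2 H3 H. unfold exI in *.
  apply (@ex_RInt_Chasles_2 C_R_CompleteNormedModule p a c d); [lra|].
  apply (@ex_RInt_Chasles_1 C_R_CompleteNormedModule p a d b); auto; lra.
Qed.


Record HData := mkHD { Hf : R -> R -> C; Hsf : R -> R -> C; Htf : R -> R -> C;
  Gf : C -> C; G'f : C -> C; TT : R; LL : R }.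

Definition indom (d : HData) (s t : R) : Prop := 0 <= s <= 1 /\ 0 <= t <= TT d.

Definition HOK (d : HData) : Prop :=
  0 < TT d /\ 0 < LL d /\
  (forall s t, indom d s t -> rd (fun s' => Hf d s' t) s (Hsf d s t)) /\
  (forall s t, indom d s t -> rd (fun t' => Hf d s t') t (Htf d s t)) /\
  (forall s t, indom d s t -> rcont (fun s' => Hsf d s' t) s) /\
  (forall s t, indom d s t -> rcont (fun t' => Htf d s t') t) /\
  (forall s t s' t', indom d s t -> indom d s' t' ->
     Cmod (Hf d s t - Hf d s' t') <= LL d * (Rabs (s - s') + Rabs (t - t'))) /\
  (forall s t, indom d s t -> Cmod (Hsf d s t) <= LL d /\ Cmod (Htf d s t) <= LL d) /\
  (forall s t, indom d s t -> cd (Gf d) (Hf d s t) (G'f d (Hf d s t))).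

Definition gT (d : HData) (Psi : C -> C) (s t : R) : C := (Psi (Hf d s t) * Htf d s t)%C.
Definition gS (d : HData) (Psi : C -> C) (s t : R) : C := (Psi (Hf d s t) * Hsf d s t)%C.

Definition Bd4 d Psi (s1 s2 t1 t2 : R) : C :=
  (Int (gT d Psi s2) t1 t2 - Int (gT d Psi s1) t1 t2
   - Int (fun s => gS d Psi s t2) s1 s2 + Int (fun s => gS d Psi s t1) s1 s2)%C.

Definition okPsi d (Psi : C -> C) : Prop := forall s t, indom d s t -> ccont Psi (Hf d s t).

Definition rect d (s1 s2 t1 t2 : R) : Prop := 0 <= s1 <= s2 /\ s2 <= 1 /\ 0 <= t1 <= t2 /\ t2 <= TT d.

Lemma exT d Psi s t1 t2 : HOK d -> okPsi d Psi -> 0 <= s <= 1 -> 0 <= t1 <= t2 -> t2 <= TT d ->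
  exI (gT d Psi s) t1 t2.
Proof.
  intros Hd HP Hs Ht1 Ht2. destruct Hd as (_&_&_&H2&_&H4&_).
  apply exI_rcont; [lra|]. intros t Ht. unfold gT.
  assert (I : indom d s t) by (split; lra).
  apply rcont_mult; [|apply H4; auto].
  apply rcont_comp; [apply HP; auto|]. eapply rd_rcont; apply H2; auto.
Qed.

Lemma exS d Psi t s1 s2 : HOK d -> okPsi d Psi -> 0 <= t <= TT d -> 0 <= s1 <= s2 -> s2 <= 1 ->
  exI (fun s => gS d Psi s t) s1 s2.
Proof.
  intros Hd HP Ht Hs1 Hs2. destruct Hd as (_&_&H1&_&H3&_).
  apply exI_rcont; [lra|]. intros s Hs. unfold gS.
  assert (I : indom d s t) by (split; lra).
  apply rcont_mult; [|apply H3; auto].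
  apply rcont_comp with (G := Psi) (p := fun s' => Hf d s' t); [apply HP; auto|]. eapply rd_rcont; apply H1; auto.
Qed.

Lemma splitS d Psi s1 m s2 t1 t2 : HOK d -> okPsi d Psi -> rect d s1 s2 t1 t2 -> s1 <= m <= s2 ->
  Bd4 d Psi s1 s2 t1 t2 = (Bd4 d Psi s1 m t1 t2 + Bd4 d Psi m s2 t1 t2)%C.
Proof.
  intros Hd HP Hr Hm. destruct Hr as (?&?&?&?). unfold Bd4.
  rewrite <- (Int_Chasles (fun s => gS d Psi s t2) s1 m s2) by (apply exS; auto; lra).
  rewrite <- (Int_Chasles (fun s => gS d Psi s t1) s1 m s2) by (apply exS; auto; lra).
  ring.
Qed.

Lemma splitT d Psi s1 s2 t1 n t2 : HOK d -> okPsi d Psi -> rect d s1 s2 t1 t2 -> t1 <= n <= t2 ->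
  Bd4 d Psi s1 s2 t1 t2 = (Bd4 d Psi s1 s2 t1 n + Bd4 d Psi s1 s2 n t2)%C.
Proof.
  intros Hd HP Hr Hn. destruct Hr as (?&?&?&?). unfold Bd4.
  rewrite <- (Int_Chasles (gT d Psi s2) t1 n t2) by (apply exT; auto; lra).
  rewrite <- (Int_Chasles (gT d Psi s1) t1 n t2) by (apply exT; auto; lra).
  ring.
Qed.

Lemma Bd4_plus d P1 P2 s1 s2 t1 t2 : HOK d -> okPsi d P1 -> okPsi d P2 -> rect d s1 s2 t1 t2 ->
  Bd4 d (fun w => P1 w + P2 w)%C s1 s2 t1 t2 = (Bd4 d P1 s1 s2 t1 t2 + Bd4 d P2 s1 s2 t1 t2)%C.
Proof.
  intros Hd H1 H2 Hr. destruct Hr as (?&?&?&?). unfold Bd4.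
  assert (ET : forall s, 0 <= s <= 1 -> Int (gT d (fun w => P1 w + P2 w)%C s) t1 t2 = (Int (gT d P1 s) t1 t2 + Int (gT d P2 s) t1 t2)%C).
  { intros s Hs. rewrite <- Int_plus by (apply exT; auto; lra). apply Int_ext; [lra|]. intros; unfold gT; ring. }
  assert (ES : forall t, 0 <= t <= TT d -> Int (fun s => gS d (fun w => P1 w + P2 w)%C s t) s1 s2 =
     (Int (fun s => gS d P1 s t) s1 s2 + Int (fun s => gS d P2 s t) s1 s2)%C).
  { intros t Ht. rewrite <- Int_plus by (apply exS; auto; lra). apply Int_ext; [lra|]. intros; unfold gS; ring. }
  rewrite !ET, !ES by lra. ring.
Qed.

Lemma cd_eq F z l l' : cd F z l -> l = l' -> cd F z l'.
Proof. intros H E; subst; auto. Qed.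

Definition Lin (al be w0 : C) (w : C) : C := (al + be * (w - w0))%C.
Definition Phi (al be w0 : C) (w : C) : C := (al * w + (be / 2) * ((w - w0) * (w - w0)))%C.

Lemma cd_Phi al be w0 w : cd (Phi al be w0) w (Lin al be w0 w).
Proof.
  unfold Phi, Lin. eapply cd_eq.
  - apply cd_plus; [apply cd_scal, cd_id|]. apply cd_scal. apply cd_mult; apply cd_minus; (apply cd_id || apply cd_const).
  - cbv beta. field.
Qed.

Lemma okPsi_Lin d al be w0 : okPsi d (Lin al be w0).
Proof.
  intros s t _. apply cd_ccont with (l := be). unfold Lin. eapply cd_eq.
  - apply cd_plus; [apply cd_const|]. apply cd_scal. apply cd_minus; [apply cd_id|apply cd_const].
  - ring.
Qed.

Lemma Bd4_Lin d al be w0 s1 s2 t1 t2 : HOK d -> rect d s1 s2 t1 t2 -> Bd4 d (Lin al be w0) s1 s2 t1 t2 = RtoC 0.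
Proof.
  intros Hd Hr. pose proof Hd as Hd'. destruct Hd' as (_&_&H1&H2&H3&H4&_).
  destruct Hr as (?&?&?&?).
  assert (ET : forall s, 0 <= s <= 1 -> Int (gT d (Lin al be w0) s) t1 t2 =
     (Phi al be w0 (Hf d s t2) - Phi al be w0 (Hf d s t1))%C).
  { intros s Hs. apply (Int_FTC (fun t => Phi al be w0 (Hf d s t))); [lra| |].
    - intros t Ht. unfold gT. apply rd_comp; [apply cd_Phi|]. apply H2. split; lra.
    - intros t Ht. unfold gT. apply rcont_mult; [|apply H4; split; lra].
      apply rcont_comp; [apply okPsi_Lin; split; lra|]. eapply rd_rcont; apply H2; split; lra. }
  assert (ES : forall t, 0 <= t <= TT d -> Int (fun s => gS d (Lin al be w0) s t) s1 s2 =
     (Phi al be w0 (Hf d s2 t) - Phi al be w0 (Hf d s1 t))%C).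
  { intros t Ht. apply (Int_FTC (fun s => Phi al be w0 (Hf d s t))); [lra| |].
    - intros s Hs. unfold gS. apply (rd_comp _ (fun s' => Hf d s' t)); [apply cd_Phi|]. apply H1. split; lra.
    - intros s Hs. unfold gS. apply rcont_mult; [|apply H3; split; lra].
      apply rcont_comp with (p := fun s' => Hf d s' t); [apply okPsi_Lin; split; lra|]. eapply rd_rcont; apply H1; split; lra. }
  unfold Bd4. rewrite !ET, !ES by lra. ring.
Qed.

Definition a1 (q : (R*R)*(R*R)) := fst (fst q).
Definition a2 (q : (R*R)*(R*R)) := snd (fst q).
Definition b1 (q : (R*R)*(R*R)) := fst (snd q).
Definition b2 (q : (R*R)*(R*R)) := snd (snd q).

Definition Bq d Psi q := Bd4 d Psi (a1 q) (a2 q) (b1 q) (b2 q).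
Definition rectq d q := rect d (a1 q) (a2 q) (b1 q) (b2 q).

Definition qu1 (q : (R*R)*(R*R)) := ((a1 q, (a1 q + a2 q)/2), (b1 q, (b1 q + b2 q)/2)).
Definition qu2 (q : (R*R)*(R*R)) := (((a1 q + a2 q)/2, a2 q), (b1 q, (b1 q + b2 q)/2)).
Definition qu3 (q : (R*R)*(R*R)) := ((a1 q, (a1 q + a2 q)/2), ((b1 q + b2 q)/2, b2 q)).
Definition qu4 (q : (R*R)*(R*R)) := (((a1 q + a2 q)/2, a2 q), ((b1 q + b2 q)/2, b2 q)).

Lemma quarters_sum d Psi q : HOK d -> okPsi d Psi -> rectq d q ->
  Bq d Psi q = (Bq d Psi (qu1 q) + Bq d Psi (qu2 q) + Bq d Psi (qu3 q) + Bq d Psi (qu4 q))%C.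
Proof.
  intros Hd HP Hr. pose proof Hr as (?&?&?&?). unfold Bq, qu1, qu2, qu3, qu4, a1, a2, b1, b2 in *; simpl.
  rewrite (splitS d Psi _ ((fst (fst q) + snd (fst q)) / 2)) by (auto; lra).
  rewrite (splitT d Psi (fst (fst q)) ((fst (fst q) + snd (fst q)) / 2) _ ((fst (snd q) + snd (snd q)) / 2)) by (auto; unfold rect; lra).
  rewrite (splitT d Psi ((fst (fst q) + snd (fst q)) / 2) (snd (fst q)) _ ((fst (snd q) + snd (snd q)) / 2)) by (auto; unfold rect; lra).
  ring.
Qed.

Definition step d Psi q :=
  if Rle_dec (Cmod (Bq d Psi q) / 4) (Cmod (Bq d Psi (qu1 q))) then qu1 q
  else if Rle_dec (Cmod (Bq d Psi q) / 4) (Cmod (Bq d Psi (qu2 q))) then qu2 q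
  else if Rle_dec (Cmod (Bq d Psi q) / 4) (Cmod (Bq d Psi (qu3 q))) then qu3 q
  else qu4 q.

Definition shape q q' := a1 q <= a1 q' /\ a2 q' <= a2 q /\ b1 q <= b1 q' /\ b2 q' <= b2 q /\
  a2 q' - a1 q' = (a2 q - a1 q) / 2 /\ b2 q' - b1 q' = (b2 q - b1 q) / 2.

Lemma step_prop d Psi q : HOK d -> okPsi d Psi -> rectq d q ->
  Cmod (Bq d Psi q) <= 4 * Cmod (Bq d Psi (step d Psi q)) /\ shape q (step d Psi q) /\ rectq d (step d Psi q).
Proof.
  intros Hd HP Hr. pose proof Hr as (?&?&?&?).
  assert (S1 : shape q (qu1 q) /\ rectq d (qu1 q)) by (unfold shape, rectq, rect, qu1, a1, a2, b1, b2 in *; simpl; lra).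
  assert (S2 : shape q (qu2 q) /\ rectq d (qu2 q)) by (unfold shape, rectq, rect, qu2, a1, a2, b1, b2 in *; simpl; lra).
  assert (S3 : shape q (qu3 q) /\ rectq d (qu3 q)) by (unfold shape, rectq, rect, qu3, a1, a2, b1, b2 in *; simpl; lra).
  assert (S4 : shape q (qu4 q) /\ rectq d (qu4 q)) by (unfold shape, rectq, rect, qu4, a1, a2, b1, b2 in *; simpl; lra).
  unfold step.
  destruct (Rle_dec _ _) as [X1|X1]; [split; [lra|auto]|].
  destruct (Rle_dec _ _) as [X2|X2]; [split; [lra|auto]|].
  destruct (Rle_dec _ _) as [X3|X3]; [split; [lra|auto]|].
  split; auto.
  pose proof (quarters_sum d Psi q Hd HP Hr) as Hs.
  assert (Cmod (Bq d Psi q) <= Cmod (Bq d Psi (qu1 q)) + Cmod (Bq d Psi (qu2 q)) + Cmod (Bq d Psi (qu3 q)) + Cmod (Bq d Psi (qu4 q))).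
  { rewrite Hs at 1. eapply Rle_trans; [apply Cmod_triangle|]. pose proof (Cmod_tri3 (Bq d Psi (qu1 q)) (Bq d Psi (qu2 q)) (Bq d Psi (qu3 q))). lra. }
  lra.
Qed.

Lemma pow2_unbounded K : exists n, K < 2 ^ n.
Proof.
  destruct (Pow_x_infinity 2 ltac:(rewrite Rabs_right; lra) (K + 1)) as [N HN].
  exists N. specialize (HN N (le_n N)). rewrite Rabs_right in HN; [lra|]. apply Rle_ge, pow_le; lra.
Qed.

Lemma nested_lim (u v : nat -> R) : (forall n m, (n <= m)%nat -> u n <= u m /\ v m <= v n) ->
  (forall n, u n <= v n) -> exists x, forall n, u n <= x <= v n.
Proof.
  intros Hm Huv.
  destruct (completeness (fun x => exists n, x = u n)) as [x [Hub Hlub]].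
  { exists (v 0%nat). intros y [n ->]. pose proof (Hm 0%nat n (Nat.le_0_l n)). specialize (Huv n). lra. }
  { exists (u 0%nat). exists 0%nat. auto. }
  exists x. intros n. split.
  - apply Hub. exists n. auto.
  - apply Hlub. intros y [k ->]. destruct (Nat.le_ge_cases k n) as [L|L].
    + pose proof (Hm k n L). pose proof (Huv n). lra.
    + pose proof (Hm n k L). pose proof (Huv k). lra.
Qed.

Definition Qs d Psi q0 (n : nat) := Nat.iter n (step d Psi) q0.

Lemma Qs_prop d Psi q0 : HOK d -> okPsi d Psi -> rectq d q0 -> forall n,
  rectq d (Qs d Psi q0 n) /\ Cmod (Bq d Psi q0) <= 4 ^ n * Cmod (Bq d Psi (Qs d Psi q0 n)) /\
  a2 (Qs d Psi q0 n) - a1 (Qs d Psi q0 n) = (a2 q0 - a1 q0) / 2 ^ n /\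
  b2 (Qs d Psi q0 n) - b1 (Qs d Psi q0 n) = (b2 q0 - b1 q0) / 2 ^ n.
Proof.
  intros Hd HP Hr n. induction n as [|n IH].
  - simpl. split; [exact Hr|]. split; [lra|]. split; field.
  - destruct IH as (R1&R2&R3&R4).
    destruct (step_prop d Psi (Qs d Psi q0 n) Hd HP R1) as (S1&S2&S3).
    change (Qs d Psi q0 (S n)) with (step d Psi (Qs d Psi q0 n)).
    destruct S2 as (_&_&_&_&S5&S6). rewrite S5, S6, R3, R4. simpl.
    assert (0 < 2 ^ n) by (apply pow_lt; lra). assert (0 < 4 ^ n) by (apply pow_lt; lra).
    split; [exact S3|]. split.
    + eapply Rle_trans; [exact R2|]. replace (4 * 4 ^ n) with (4 ^ n * 4) by ring. rewrite Rmult_assoc. apply Rmult_le_compat_l; lra.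
    + split; field; lra.
Qed.

Lemma Qs_mono d Psi q0 : HOK d -> okPsi d Psi -> rectq d q0 -> forall n m, (n <= m)%nat ->
  a1 (Qs d Psi q0 n) <= a1 (Qs d Psi q0 m) /\ a2 (Qs d Psi q0 m) <= a2 (Qs d Psi q0 n) /\
  b1 (Qs d Psi q0 n) <= b1 (Qs d Psi q0 m) /\ b2 (Qs d Psi q0 m) <= b2 (Qs d Psi q0 n).
Proof.
  intros Hd HP Hr n m Hnm. induction Hnm as [|m Hnm IH]; [lra|].
  destruct (Qs_prop d Psi q0 Hd HP Hr m) as (R1&_).
  destruct (step_prop d Psi (Qs d Psi q0 m) Hd HP R1) as (_&S2&_).
  change (Qs d Psi q0 (S m)) with (step d Psi (Qs d Psi q0 m)).
  destruct S2 as (?&?&?&?&_). lra.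
Qed.

Lemma Bd4_ext d P P' s1 s2 t1 t2 : rect d s1 s2 t1 t2 -> (forall w, P w = P' w) ->
  Bd4 d P s1 s2 t1 t2 = Bd4 d P' s1 s2 t1 t2.
Proof.
  intros (?&?&?&?) E. unfold Bd4, gT, gS.
  rewrite (Int_ext (fun t => P (Hf d s2 t) * Htf d s2 t)%C (fun t => P' (Hf d s2 t) * Htf d s2 t)%C) by (lra || (intros; cbv beta; rewrite E; auto)).
  rewrite (Int_ext (fun t => P (Hf d s1 t) * Htf d s1 t)%C (fun t => P' (Hf d s1 t) * Htf d s1 t)%C) by (lra || (intros; cbv beta; rewrite E; auto)).
  rewrite (Int_ext (fun s => P (Hf d s t2) * Hsf d s t2)%C (fun s => P' (Hf d s t2) * Hsf d s t2)%C) by (lra || (intros; cbv beta; rewrite E; auto)).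
  rewrite (Int_ext (fun s => P (Hf d s t1) * Hsf d s t1)%C (fun s => P' (Hf d s t1) * Hsf d s t1)%C) by (lra || (intros; cbv beta; rewrite E; auto)).
  reflexivity.
Qed.

Lemma cd_Lin al be w0 w : cd (Lin al be w0) w be.
Proof.
  unfold Lin. eapply cd_eq.
  - apply cd_plus; [apply cd_const|]. apply cd_scal. apply cd_minus; [apply cd_id|apply cd_const].
  - ring.
Qed.

Lemma Bq_small d q0 eps : HOK d -> rectq d q0 -> 0 < eps ->
  Cmod (Bq d (Gf d) q0) <= 2 * eps * LL d ^ 2 * ((a2 q0 - a1 q0) + (b2 q0 - b1 q0)) ^ 2.
Proof.
  intros Hd Hr Heps. pose proof Hd as Hd'. destruct Hd' as (HT&HL&H1&H2&H3&H4&HLip&Hbd&Hcd).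
  set (L := LL d) in *. set (G := Gf d) in *.
  assert (HP : okPsi d G) by (intros s t I; eapply cd_ccont; apply Hcd; auto).
  set (A := a2 q0 - a1 q0). set (B := b2 q0 - b1 q0).
  pose proof Hr as (Hr1&Hr2&Hr3&Hr4).
  destruct (nested_lim (fun n => a1 (Qs d G q0 n)) (fun n => a2 (Qs d G q0 n))) as [ss Hss].
  { intros n m Hnm. destruct (Qs_mono d G q0 Hd HP Hr n m Hnm) as (?&?&?&?). auto. }
  { intros n. destruct (Qs_prop d G q0 Hd HP Hr n) as ((?&?&?&?)&_). lra. }
  destruct (nested_lim (fun n => b1 (Qs d G q0 n)) (fun n => b2 (Qs d G q0 n))) as [tt Htt].
  { intros n m Hnm. destruct (Qs_mono d G q0 Hd HP Hr n m Hnm) as (?&?&?&?). auto. }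
  { intros n. destruct (Qs_prop d G q0 Hd HP Hr n) as ((?&?&?&?)&_). lra. }
  assert (I0 : indom d ss tt).
  { specialize (Hss 0%nat). specialize (Htt 0%nat). simpl in Hss, Htt. unfold a1, a2, b1, b2 in *. split; lra. }
  set (w0 := Hf d ss tt).
  destruct (Hcd ss tt I0 eps Heps) as [del [Hdel Wd]]. fold w0 G in Wd.
  destruct (pow2_unbounded (L * (A + B) / del)) as [n Hn].
  assert (P2 : 0 < 2 ^ n) by (apply pow_lt; lra).
  destruct (Qs_prop d G q0 Hd HP Hr n) as (Rq&Bq0&EA&EB).
  set (q := Qs d G q0 n) in *. fold A B in EA, EB.
  specialize (Hss n). specialize (Htt n). fold q in Hss, Htt. simpl in Hss, Htt.
  pose proof Rq as (Rq1&Rq2&Rq3&Rq4).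
  assert (HA : 0 <= A) by (unfold A, a1, a2 in *; lra). assert (HB : 0 <= B) by (unfold B, b1, b2 in *; lra).
  set (r := L * (A + B) / 2 ^ n).
  assert (Hr0 : 0 <= r) by (unfold r; apply Rmult_le_pos; [nra|apply Rlt_le, Rinv_0_lt_compat; auto]).
  assert (Hrdel : r < del).
  { unfold r. apply (Rmult_lt_reg_r (2 ^ n)); auto. unfold Rdiv. rewrite Rmult_assoc, Rinv_l by lra.
    apply (Rmult_lt_compat_l del) in Hn; auto. unfold Rdiv in Hn. rewrite Rmult_comm, Rmult_assoc, Rinv_l in Hn by lra. lra. }
  assert (Cl : forall s t, a1 q <= s <= a2 q -> b1 q <= t <= b2 q -> Cmod (Hf d s t - w0) <= r).
  { intros s t Hs Ht. unfold w0. eapply Rle_trans; [apply HLip; unfold indom, a1, a2, b1, b2 in *; split; lra|].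
    unfold r. replace (L * (A + B) / 2 ^ n) with (L * (A / 2 ^ n + B / 2 ^ n)) by (field; lra).
    apply Rmult_le_compat_l; [lra|]. rewrite <- EA, <- EB.
    apply Rplus_le_compat; apply Rabs_le; lra. }
  set (Rem := fun w => (G w - Lin (G w0) (G'f d w0) w0 w)%C).
  assert (HPR : okPsi d Rem).
  { intros s t I. eapply cd_ccont. apply cd_minus; [apply Hcd; auto|apply cd_Lin]. }
  assert (EBq : Bq d G q = Bq d Rem q).
  { unfold Bq. rewrite (Bd4_ext d G (fun w => Lin (G w0) (G'f d w0) w0 w + Rem w)%C) by (auto; intros; unfold Rem; ring).
    rewrite Bd4_plus by (auto; apply okPsi_Lin). rewrite Bd4_Lin by auto. ring. }
  set (M := eps * r * L).
  assert (HRem : forall s t, a1 q <= s <= a2 q -> b1 q <= t <= b2 q ->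
    Cmod (Rem (Hf d s t)) * L <= M).
  { intros s t Hs Ht. unfold M. apply Rmult_le_compat_r; [lra|].
    pose proof (Cl s t Hs Ht). unfold Rem, Lin.
    replace (G (Hf d s t) - (G w0 + G'f d w0 * (Hf d s t - w0)))%C with (G (Hf d s t) - G w0 - G'f d w0 * (Hf d s t - w0))%C by ring.
    eapply Rle_trans; [apply Wd; lra|]. apply Rmult_le_compat_l; lra. }
  assert (IT : forall s, a1 q <= s <= a2 q -> Cmod (Int (gT d Rem s) (b1 q) (b2 q)) <= (b2 q - b1 q) * M).
  { intros s Hs. apply Int_bound; [lra| apply exT; auto; unfold a1, a2, b1, b2 in *; lra|].
    intros t Ht. unfold gT. rewrite Cmod_mult. eapply Rle_trans; [|apply (HRem s t Hs Ht)].
    apply Rmult_le_compat_l; [apply Cmod_ge_0|]. apply Hbd. unfold indom, a1, a2, b1, b2 in *; split; lra. }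
  assert (IS : forall t, b1 q <= t <= b2 q -> Cmod (Int (fun s => gS d Rem s t) (a1 q) (a2 q)) <= (a2 q - a1 q) * M).
  { intros t Ht. apply Int_bound; [lra| apply exS; auto; unfold a1, a2, b1, b2 in *; lra|].
    intros s Hs. unfold gS. rewrite Cmod_mult. eapply Rle_trans; [|apply (HRem s t Hs Ht)].
    apply Rmult_le_compat_l; [apply Cmod_ge_0|]. apply Hbd. unfold indom, a1, a2, b1, b2 in *; split; lra. }
  assert (Bqb : Cmod (Bq d Rem q) <= 2 * ((a2 q - a1 q) + (b2 q - b1 q)) * M).
  { unfold Bq, Bd4.
    pose proof (IT (a2 q) ltac:(lra)). pose proof (IT (a1 q) ltac:(lra)).
    pose proof (IS (b2 q) ltac:(lra)). pose proof (IS (b1 q) ltac:(lra)).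
    eapply Rle_trans; [apply Cmod_triangle|]. eapply Rle_trans; [apply Rplus_le_compat_r, Cmod_sub|].
    eapply Rle_trans; [apply Rplus_le_compat_r, Rplus_le_compat_r, Cmod_sub|]. lra. }
  rewrite EBq in Bq0. rewrite EA, EB in Bqb.
  eapply Rle_trans; [exact Bq0|].
  assert (E4 : 4 ^ n = 2 ^ n * 2 ^ n) by (rewrite <- Rpow_mult_distr; f_equal; ring).
  rewrite E4. unfold M, r in Bqb |- *.
  assert (X : 2 ^ n * 2 ^ n * (2 * (A / 2 ^ n + B / 2 ^ n) * (eps * (L * (A + B) / 2 ^ n) * L)) =
              2 * eps * L ^ 2 * (A + B) ^ 2) by (field; lra).
  rewrite <- X. apply Rmult_le_compat_l; [nra|]. exact Bqb.
Qed.

Theorem Bq_zero d q0 : HOK d -> rectq d q0 -> Bq d (Gf d) q0 = RtoC 0.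
Proof.
  intros Hd Hr. apply Cmod_eq_0.
  set (K := 2 * LL d ^ 2 * ((a2 q0 - a1 q0) + (b2 q0 - b1 q0)) ^ 2 + 1).
  assert (HK : 0 < K) by (unfold K; assert (0 <= 2 * LL d ^ 2 * ((a2 q0 - a1 q0) + (b2 q0 - b1 q0)) ^ 2) by (apply Rmult_le_pos; [apply Rmult_le_pos; [lra|apply pow2_ge_0]|apply pow2_ge_0]); lra).
  pose proof (Cmod_ge_0 (Bq d (Gf d) q0)).
  destruct (Req_dec (Cmod (Bq d (Gf d) q0)) 0) as [Z|Z]; auto. exfalso.
  set (X := Cmod (Bq d (Gf d) q0)) in *.
  pose proof (Bq_small d q0 (X / (2 * K)) Hd Hr ltac:(apply Rdiv_lt_0_compat; lra)). fold X in H0.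
  assert (2 * (X / (2 * K)) * LL d ^ 2 * (a2 q0 - a1 q0 + (b2 q0 - b1 q0)) ^ 2 <= X / (2 * K) * K).
  { assert (0 < X / (2 * K)) by (apply Rdiv_lt_0_compat; lra). set (y := X / (2 * K)) in *. clearbody y.
    unfold K. set (S := (a2 q0 - a1 q0 + (b2 q0 - b1 q0))). set (L2 := LL d ^ 2).
    replace (y * (2 * L2 * S ^ 2 + 1)) with (2 * y * L2 * S ^ 2 + y) by ring. lra. }
  assert (X / (2 * K) * K = X / 2) by (field; lra). lra.
Qed.

Theorem HC d : HOK d -> (forall s, 0 <= s <= 1 -> Hf d s 0 = Hf d s (TT d) /\ Hsf d s 0 = Hsf d s (TT d)) ->
  Int (gT d (Gf d) 0) 0 (TT d) = Int (gT d (Gf d) 1) 0 (TT d).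
Proof.
  intros Hd Hper. pose proof Hd as (HT&_).
  assert (Hr : rectq d ((0,1),(0,TT d))) by (unfold rectq, rect, a1, a2, b1, b2; simpl; lra).
  pose proof (Bq_zero d _ Hd Hr) as Z. unfold Bq, Bd4, a1, a2, b1, b2 in Z; simpl in Z.
  assert (ES : Int (fun s => gS d (Gf d) s (TT d)) 0 1 = Int (fun s => gS d (Gf d) s 0) 0 1).
  { apply Int_ext; [lra|]. intros s Hs. unfold gS. destruct (Hper s Hs) as [E1 E2]. rewrite E1, E2. auto. }
  rewrite ES in Z.
  replace (Int (gT d (Gf d) 0) 0 (TT d)) with (Int (gT d (Gf d) 1) 0 (TT d) - (Int (gT d (Gf d) 1) 0 (TT d) - Int (gT d (Gf d) 0) 0 (TT d) - Int (fun s => gS d (Gf d) s 0) 0 1 + Int (fun s => gS d (Gf d) s 0) 0 1))%C by ring.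
  rewrite Z. ring.
Qed.


Lemma rd_eq p t l l' : rd p t l -> l = l' -> rd p t l'.
Proof. intros H E; subst; auto. Qed.

Lemma E_per : E 0 = E (2 * PI).
Proof. unfold E. rewrite cos_0, sin_0, cos_2PI, sin_2PI. auto. Qed.

Lemma E_lip a b : Cmod (E a - E b) <= Rabs (a - b).
Proof.
  destruct (Rle_dec b a) as [H|H].
  - rewrite Rabs_right by lra. rewrite <- (Rmult_1_l (a - b)).
    apply (mvi E (fun t => Ci * E t)%C b a 1); [lra|intros; apply rd_E|].
    intros t _. rewrite Cmod_mult, Cmod_Ci, Cmod_E. lra.
  - rewrite Rabs_left by lra. rewrite Cmod_minus_sym. replace (- (a - b)) with (1 * (b - a)) by ring.
    apply (mvi E (fun t => Ci * E t)%C a b 1); [lra|intros; apply rd_E|].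
    intros t _. rewrite Cmod_mult, Cmod_Ci, Cmod_E. lra.
Qed.

Lemma E_neq0 t : E t <> RtoC 0.
Proof. intro X. pose proof (Cmod_E t). rewrite X, Cmod_0 in H. lra. Qed.

Lemma rcont_E t : rcont E t.
Proof. eapply rd_rcont. apply rd_E. Qed.

Lemma Int_const (c : C) a b : a <= b -> Int (fun _ => c) a b = (RtoC (b - a) * c)%C.
Proof.
  intros Hab. rewrite (Int_FTC (fun t => RtoC t * c)%C); [|lra| |].
  - rewrite RtoC_minus. ring.
  - intros t _. eapply rd_eq. apply rd_ext with (fun t => c * RtoC t)%C; [intros; ring|]. apply rd_scal, rd_id. ring.
  - intros; apply rcont_const.
Qed.

Definition CI (rho : R) (Phi : C -> C) : C :=
  Int (fun th => Phi (RtoC rho * E th) * (Ci * (RtoC rho * E th)))%C 0 (2 * PI).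

Lemma PI2_pos : 0 < 2 * PI.
Proof. pose proof PI_RGT_0. lra. Qed.

Lemma ccont_rcont_circ (Phi : C -> C) (c r : C) t : ccont Phi (c + r * E t)%C -> rcont (fun th => Phi (c + r * E th))%C t.
Proof.
  intros H. apply rcont_comp with (p := fun th => (c + r * E th)%C); auto.
  eapply rd_rcont. apply rd_plus; [apply rd_const|]. apply rd_scal. apply rd_E.
Qed.

Definition hH (z : C) (eps rho : R) (s t : R) : C := ((z + RtoC eps * E t) + RtoC s * (RtoC rho * E t - (z + RtoC eps * E t)))%C.
Definition hHs (z : C) (eps rho : R) (s t : R) : C := (RtoC rho * E t - (z + RtoC eps * E t))%C.
Definition hHt (z : C) (eps rho : R) (s t : R) : C := (RtoC eps * (Ci * E t) + RtoC s * (RtoC rho * (Ci * E t) - RtoC eps * (Ci * E t)))%C.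

Lemma hH_alt z eps rho s t : hH z eps rho s t = (RtoC (1 - s) * z + RtoC ((1 - s) * eps + s * rho) * E t)%C.
Proof. unfold hH. rewrite !RtoC_plus, !RtoC_mult, !RtoC_minus. ring. Qed.

Lemma hH_minus_z z eps rho s t : (hH z eps rho s t - z = RtoC ((1 - s) * eps + s * rho) * E t - RtoC s * z)%C.
Proof. rewrite hH_alt. rewrite !RtoC_plus, !RtoC_mult, !RtoC_minus. ring. Qed.

Lemma cauchy_eps (F F' : C -> C) (R0 rho eps : R) (z : C) :
  (forall w, Cmod w < R0 -> cd F w (F' w)) -> 0 < rho -> rho < R0 -> 0 < eps -> Cmod z + eps < rho ->
  CI rho (fun w => F w / (w - z))%C = Int (fun th => Ci * F (z + RtoC eps * E th))%C 0 (2 * PI).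
Proof.
  intros HF Hrho HR Heps Hz.
  pose proof (Cmod_ge_0 z) as Hz0.
  set (G := fun w => (F w * / (w - z))%C).
  set (G' := fun w => (F' w * / (w - z) + F w * (- (1 - 0) / ((w - z) * (w - z))))%C).
  set (d := mkHD (hH z eps rho) (hHs z eps rho) (hHt z eps rho) G G' (2 * PI) (2 * rho + Cmod z + 1)).
  assert (Hdom : forall s t, indom d s t -> 0 <= s <= 1) by (intros s t [H _]; auto).
  assert (Hok : HOK d).
  { split; [apply PI2_pos|]. split; [simpl; lra|].
    split.
    { intros s t _. simpl. unfold hH, hHs. eapply rd_eq.
      - apply rd_plus; [apply rd_const|]. apply rd_ext with (fun s' => (RtoC rho * E t - (z + RtoC eps * E t)) * RtoC s')%C; [intros; ring|].
        apply rd_scal, rd_id.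
      - ring. }
    split.
    { intros s t _. simpl. unfold hH, hHt. eapply rd_eq.
      - apply rd_plus.
        + apply rd_plus; [apply rd_const|]. apply rd_scal, rd_E.
        + apply rd_scal. apply rd_minus; [apply rd_scal, rd_E|]. apply rd_plus; [apply rd_const|]. apply rd_scal, rd_E.
      - ring. }
    split.
    { intros s t _. simpl. unfold hHs. apply rcont_const. }
    split.
    { intros s t _. simpl. unfold hHt. eapply rd_rcont.
      apply rd_plus; [apply rd_scal, rd_scal, rd_E|]. apply rd_scal. apply rd_minus; apply rd_scal, rd_scal, rd_E. }
    split.
    { intros s t s' t' [Hs _] [Hs' _]. simpl. rewrite !hH_alt.
      replace (RtoC (1 - s) * z + RtoC ((1 - s) * eps + s * rho) * E t - (RtoC (1 - s') * z + RtoC ((1 - s') * eps + s' * rho) * E t'))%C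
        with (RtoC (s' - s) * z + RtoC ((s - s') * (rho - eps)) * E t + RtoC ((1 - s') * eps + s' * rho) * (E t - E t'))%C
        by (rewrite !RtoC_plus, !RtoC_mult, !RtoC_minus; ring).
      eapply Rle_trans; [apply Cmod_tri3|]. rewrite !Cmod_mult, !Cmod_R, Cmod_E.
      pose proof (E_lip t t'). pose proof (Rabs_pos (s - s')). pose proof (Rabs_pos (t - t')).
      rewrite (Rabs_minus_sym s' s), Rabs_mult, (Rabs_right (rho - eps)) by lra.
      rewrite (Rabs_right ((1 - s') * eps + s' * rho)) by nra.
      assert (((1 - s') * eps + s' * rho) <= rho) by nra.
      assert (((1 - s') * eps + s' * rho) * Cmod (E t - E t') <= rho * Rabs (t - t')).
      { apply Rmult_le_compat; try lra; [nra|apply Cmod_ge_0]. }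
      nra. }
    split.
    { intros s t [Hs _]. simpl. unfold hHs, hHt. split.
      - eapply Rle_trans; [apply Cmod_sub|]. eapply Rle_trans; [apply Rplus_le_compat_l, Cmod_triangle|].
        rewrite !Cmod_mult, !Cmod_R, Cmod_E, !Rabs_right by lra. lra.
      - replace (RtoC eps * (Ci * E t) + RtoC s * (RtoC rho * (Ci * E t) - RtoC eps * (Ci * E t)))%C
          with (RtoC ((1 - s) * eps + s * rho) * (Ci * E t))%C by (rewrite !RtoC_plus, !RtoC_mult, !RtoC_minus; ring).
        rewrite !Cmod_mult, Cmod_R, Cmod_Ci, Cmod_E, Rabs_right by nra. nra. }
    intros s t [Hs _]. simpl.
    assert (Hne : (hH z eps rho s t - z)%C <> RtoC 0).
    { intro X. assert (Cmod (hH z eps rho s t - z) = 0) by (rewrite X; apply Cmod_0).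
      rewrite hH_minus_z in H. pose proof (Cmod_rev_tri (RtoC ((1 - s) * eps + s * rho) * E t) (RtoC s * z)).
      rewrite H, !Cmod_mult, !Cmod_R, Cmod_E, !Rabs_right in H0 by nra. nra. }
    assert (Hin : Cmod (hH z eps rho s t) < R0).
    { rewrite hH_alt. eapply Rle_lt_trans; [apply Cmod_triangle|]. rewrite !Cmod_mult, !Cmod_R, Cmod_E, !Rabs_right by nra. nra. }
    unfold G, G'. cbv beta. eapply cd_eq.
    - apply cd_mult; [apply HF; auto|].
      apply (cd_inv (fun w => w - z)%C); auto. apply cd_minus; [apply cd_id|apply cd_const].
    - reflexivity. }
  pose proof (HC d Hok) as Hc. simpl in Hc.
  assert (Hper : forall s, 0 <= s <= 1 -> hH z eps rho s 0 = hH z eps rho s (2 * PI) /\ hHs z eps rho s 0 = hHs z eps rho s (2 * PI)).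
  { intros s _. unfold hH, hHs. rewrite <- E_per. auto. }
  specialize (Hc Hper).
  unfold CI. symmetry. etransitivity; [|etransitivity; [exact Hc|]].
  - apply Int_ext; [apply Rlt_le, PI2_pos|]. intros th _. unfold gT; simpl. unfold G, hH, hHt.
    replace (z + RtoC eps * E th + RtoC 0 * (RtoC rho * E th - (z + RtoC eps * E th)))%C with (z + RtoC eps * E th)%C by ring.
    replace (z + RtoC eps * E th - z)%C with (RtoC eps * E th)%C by ring.
    field. split; [apply E_neq0|]. intro X. injection X. lra.
  - apply Int_ext; [apply Rlt_le, PI2_pos|]. intros th _. unfold gT; simpl. unfold G, hH, hHt.
    replace (z + RtoC eps * E th + RtoC 1 * (RtoC rho * E th - (z + RtoC eps * E th)))%C with (RtoC rho * E th)%C by ring.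
    replace (RtoC eps * (Ci * E th) + RtoC 1 * (RtoC rho * (Ci * E th) - RtoC eps * (Ci * E th)))%C with (Ci * (RtoC rho * E th))%C by ring.
    unfold Cdiv. ring.
Qed.

Lemma Cmod_le_eps_eq (a b : C) : (forall eta, 0 < eta -> Cmod (a - b) <= eta) -> a = b.
Proof.
  intros H. destruct (Req_dec (Cmod (a - b)) 0) as [Z|Z].
  - apply Cmod_eq_0 in Z. replace a with (a - b + b)%C by ring. rewrite Z. ring.
  - pose proof (Cmod_ge_0 (a - b)). specialize (H (Cmod (a - b) / 2) ltac:(lra)). lra.
Qed.

Theorem cauchy (F F' : C -> C) (R0 rho : R) (z : C) :
  (forall w, Cmod w < R0 -> cd F w (F' w)) -> 0 < rho -> rho < R0 -> Cmod z < rho ->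
  CI rho (fun w => F w / (w - z))%C = (RtoC (2 * PI) * Ci * F z)%C.
Proof.
  intros HF Hrho HR Hz. apply Cmod_le_eps_eq. intros eta Heta.
  assert (Hz' : Cmod z < R0) by lra.
  destruct (cd_ccont F z (F' z) (HF z Hz') (eta / (2 * PI)) ltac:(apply Rdiv_lt_0_compat; [lra|apply PI2_pos])) as [del [Hdel W]].
  set (eps := Rmin del (rho - Cmod z) / 2).
  assert (He : 0 < eps) by (unfold eps; pose proof (Rmin_pos del (rho - Cmod z) Hdel ltac:(lra)); lra).
  assert (He1 : eps < del) by (unfold eps; pose proof (Rmin_l del (rho - Cmod z)); lra).
  assert (He2 : Cmod z + eps < rho) by (unfold eps; pose proof (Rmin_r del (rho - Cmod z)); lra).
  rewrite (cauchy_eps F F' R0 rho eps z) by auto.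
  assert (Hc : forall th, rcont (fun th => Ci * F (z + RtoC eps * E th))%C th).
  { intros th. apply rcont_mult; [apply rcont_const|]. apply ccont_rcont_circ. eapply cd_ccont. apply HF.
    eapply Rle_lt_trans; [apply Cmod_triangle|]. rewrite Cmod_mult, Cmod_R, Cmod_E, Rabs_right by lra. lra. }
  assert (Ex : exI (fun th => Ci * F (z + RtoC eps * E th))%C 0 (2 * PI)) by (apply exI_rcont; [apply Rlt_le, PI2_pos|auto]).
  replace (RtoC (2 * PI) * Ci * F z)%C with (Int (fun _ => Ci * F z)%C 0 (2 * PI))
    by (rewrite Int_const by (apply Rlt_le, PI2_pos); rewrite Rminus_0_r; ring).
  rewrite <- Int_minus; [| auto | apply exI_rcont; [apply Rlt_le, PI2_pos|intros; apply rcont_const]].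
  eapply Rle_trans; [apply Int_bound with (M := eta / (2 * PI))|].
  - apply Rlt_le, PI2_pos.
  - apply exI_minus; auto. apply exI_rcont; [apply Rlt_le, PI2_pos|intros; apply rcont_const].
  - intros th _. replace (Ci * F (z + RtoC eps * E th) - Ci * F z)%C with (Ci * (F (z + RtoC eps * E th) - F z))%C by ring.
    rewrite Cmod_mult, Cmod_Ci, Rmult_1_l. left. apply W.
    replace (z + RtoC eps * E th - z)%C with (RtoC eps * E th)%C by ring.
    rewrite Cmod_mult, Cmod_R, Cmod_E, Rabs_right by lra. lra.
  - right. field. pose proof PI_RGT_0. lra.
Qed.


Definition Kint (rho : R) (u : R -> C) (m : nat) (z : C) : C :=
  Int (fun th => u th / (RtoC rho * E th - z) ^ m)%C 0 (2 * PI).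

Lemma cd_quad K z l r0 C0 : 0 < r0 -> 0 <= C0 ->
  (forall w, Cmod (w - z) < r0 -> Cmod (K w - K z - l * (w - z))%C <= C0 * Cmod (w - z) ^ 2) -> cd K z l.
Proof.
  intros Hr HC H eps Heps. exists (Rmin r0 (eps / (C0 + 1))). split.
  { apply Rmin_pos; auto. apply Rdiv_lt_0_compat; lra. }
  intros w Hw. assert (H1 : Cmod (w - z) < r0) by (eapply Rlt_le_trans; [exact Hw|apply Rmin_l]).
  assert (H2 : Cmod (w - z) < eps / (C0 + 1)) by (eapply Rlt_le_trans; [exact Hw|apply Rmin_r]).
  eapply Rle_trans; [apply H; auto|]. pose proof (Cmod_ge_0 (w - z)).
  assert (Cmod (w - z) * (C0 + 1) <= eps).
  { apply (Rmult_lt_compat_r (C0 + 1)) in H2; [|lra]. unfold Rdiv in H2. rewrite Rmult_assoc, Rinv_l in H2; lra. }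
  simpl. nra.
Qed.

Lemma div_le_bound x X y y0 : 0 <= x <= X -> 0 < y0 <= y -> x / y <= X / y0.
Proof.
  intros Hx Hy. unfold Rdiv. apply Rmult_le_compat; try lra.
  - left. apply Rinv_0_lt_compat. lra.
  - apply Rinv_le_contravar; lra.
Qed.

Lemma circ_lower (rho : R) (z : C) th : Cmod (RtoC rho * E th - z) >= rho - Cmod z \/ rho < 0.
Proof.
  destruct (Rle_dec 0 rho) as [H|H]; [left|right; lra].
  pose proof (Cmod_rev_tri (RtoC rho * E th) z). rewrite Cmod_mult, Cmod_R, Cmod_E, Rabs_right in H0 by lra. lra.
Qed.

Lemma circ_low (rho : R) (z : C) th : 0 <= rho -> rho - Cmod z <= Cmod (RtoC rho * E th - z).
Proof. intros H. destruct (circ_lower rho z th); lra. Qed.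

Lemma Cpow_neq0 (x : C) (m : nat) : x <> RtoC 0 -> (x ^ m)%C <> RtoC 0.
Proof. intros H X. assert (Cmod (x ^ m) = 0) by (rewrite X; apply Cmod_0). rewrite Cmod_pow in H0.
  revert H0. apply pow_nonzero. intro Y. apply H, Cmod_eq_0; auto. Qed.

Lemma circ_ne (rho : R) (w : C) th : 0 < rho -> Cmod w < rho -> (RtoC rho * E th - w)%C <> RtoC 0.
Proof. intros Hr Hw X. pose proof (circ_low rho w th ltac:(lra)). rewrite X, Cmod_0 in H. lra. Qed.

Lemma rcont_kernel (rho : R) (u : R -> C) (m : nat) (w : C) th : 0 < rho -> Cmod w < rho -> rcont u th ->
  rcont (fun th => u th / (RtoC rho * E th - w) ^ m)%C th.
Proof.
  intros Hr Hw Hu. unfold Cdiv. apply rcont_mult; auto.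
  apply rcont_comp with (G := (fun v => / (v - w) ^ m)%C) (p := (fun th => (RtoC rho * E th))%C).
  - eapply cd_ccont. apply (cd_inv (fun v => (v - w) ^ m)%C).
    + apply Cpow_neq0, circ_ne; auto.
    + apply cd_pow. apply cd_minus; [apply cd_id|apply cd_const].
  - eapply rd_rcont. apply rd_scal, rd_E.
Qed.

Lemma exI_kernel rho u m w : 0 < rho -> Cmod w < rho -> (forall t, rcont u t) ->
  exI (fun th => u th / (RtoC rho * E th - w) ^ m)%C 0 (2 * PI).
Proof. intros. apply exI_rcont; [apply Rlt_le, PI2_pos|]. intros; apply rcont_kernel; auto. Qed.

Lemma u_bound (u : R -> C) : (forall t, rcont u t) -> exists M, 0 <= M /\ forall t, 0 <= t <= 2 * PI -> Cmod (u t) <= M.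
Proof.
  intros Hu. destruct (continuity_ab_maj (fun t => Cmod (u t)) 0 (2 * PI)) as [x [Hx _]].
  - apply Rlt_le, PI2_pos.
  - intros; apply rcont_continuity_pt; auto.
  - exists (Cmod (u x)). split; [apply Cmod_ge_0|]. auto.
Qed.

Lemma near_in rho (z w : C) : Cmod z < rho -> Cmod (w - z) < (rho - Cmod z) / 2 -> Cmod w < rho.
Proof. intros Hz Hw. replace w with (w - z + z)%C by ring. eapply Rle_lt_trans; [apply Cmod_triangle|]. lra. Qed.

Lemma near_low rho (z w : C) th : 0 < rho -> Cmod z < rho -> Cmod (w - z) < (rho - Cmod z) / 2 ->
  (rho - Cmod z) / 2 <= Cmod (RtoC rho * E th - w).
Proof.
  intros Hr Hz Hw. pose proof (circ_low rho z th ltac:(lra)).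
  replace (RtoC rho * E th - w)%C with ((RtoC rho * E th - z) - (w - z))%C by ring.
  pose proof (Cmod_rev_tri (RtoC rho * E th - z) (w - z)). lra.
Qed.

Lemma id1 (u a b : C) : a <> RtoC 0 -> b <> RtoC 0 ->
  (u / b ^ 1 - u / a ^ 1 - (a - b) * (u / a ^ 2) = u * (a - b) ^ 2 / (a ^ 2 * b))%C.
Proof. intros. field. auto. Qed.
Lemma id2 (u a b : C) : a <> RtoC 0 -> b <> RtoC 0 ->
  (u / b ^ 2 - u / a ^ 2 - (2 * (a - b)) * (u / a ^ 3) = u * (a - b) ^ 2 * (3 * a - 2 * (a - b)) / (a ^ 3 * b ^ 2))%C.
Proof. intros. field. auto. Qed.

Lemma Kdiff rho u (m : nat) (c : C) z w : 0 < rho -> (forall t, rcont u t) -> Cmod z < rho -> Cmod w < rho ->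
  (Kint rho u m w - Kint rho u m z - Kint rho u (S m) z * c = 
   Int (fun th => u th / (RtoC rho * E th - w) ^ m - u th / (RtoC rho * E th - z) ^ m - c * (u th / (RtoC rho * E th - z) ^ (S m))) 0 (2 * PI))%C.
Proof.
  intros Hr Hu Hz Hw. unfold Kint.
  set (f1 := fun th => (u th / (RtoC rho * E th - w) ^ m)%C).
  set (f2 := fun th => (u th / (RtoC rho * E th - z) ^ m)%C).
  set (f3 := fun th => (u th / (RtoC rho * E th - z) ^ (S m))%C).
  assert (E1 : exI f1 0 (2 * PI)) by (apply exI_kernel; auto).
  assert (E2 : exI f2 0 (2 * PI)) by (apply exI_kernel; auto).
  assert (E3 : exI f3 0 (2 * PI)) by (apply exI_kernel; auto).
  change (Int f1 0 (2 * PI) - Int f2 0 (2 * PI) - Int f3 0 (2 * PI) * c =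
    Int (fun th => f1 th - f2 th - c * f3 th) 0 (2 * PI))%C.
  rewrite (Cmult_comm (Int f3 0 (2 * PI)) c).
  rewrite <- (Int_Cmult c f3) by auto. rewrite <- (Int_minus f1 f2) by auto.
  rewrite <- (Int_minus (fun th => f1 th - f2 th)%C (fun th => c * f3 th)%C).
  2:{ apply exI_minus; auto. } 2:{ apply exI_Cmult; auto. }
  reflexivity.
Qed.


Lemma K_cd1 rho u z : 0 < rho -> (forall t, rcont u t) -> Cmod z < rho -> cd (Kint rho u 1) z (Kint rho u 2 z).
Proof.
  intros Hr Hu Hz. destruct (u_bound u Hu) as [M [HM0 HM]].
  set (d0 := rho - Cmod z). assert (Hd0 : 0 < d0) by (unfold d0; lra).
  assert (Hpos : 0 < d0 ^ 2 * (d0 / 2)) by (apply Rmult_lt_0_compat; [apply pow_lt|]; lra).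
  apply cd_quad with (r0 := d0 / 2) (C0 := 2 * PI * (M / (d0 ^ 2 * (d0 / 2)))); [lra| |].
  { apply Rmult_le_pos; [apply Rlt_le, PI2_pos|]. apply Rmult_le_pos; [lra|]. apply Rlt_le, Rinv_0_lt_compat; auto. }
  intros w Hw. assert (Hw' : Cmod w < rho) by (apply (near_in rho z w); auto).
  rewrite (Kdiff rho u 1 (w - z) z w) by auto.
  eapply Rle_trans; [apply Int_bound with (M := M * Cmod (w - z) ^ 2 / (d0 ^ 2 * (d0 / 2)))|].
  - apply Rlt_le, PI2_pos.
  - apply exI_minus; [apply exI_minus|apply exI_Cmult]; apply exI_kernel; auto.
  - intros th Hth. 
    assert (Ha : (RtoC rho * E th - z)%C <> RtoC 0) by (apply circ_ne; auto).
    assert (Hb : (RtoC rho * E th - w)%C <> RtoC 0) by (apply circ_ne; auto).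
    replace (w - z)%C with ((RtoC rho * E th - z) - (RtoC rho * E th - w))%C by ring.
    rewrite id1 by auto.
    replace ((RtoC rho * E th - z) - (RtoC rho * E th - w))%C with (w - z)%C by ring.
    rewrite Cmod_div by (apply Cmult_neq_0; auto; apply Cpow_neq0; auto).
    rewrite !Cmod_mult, !Cmod_pow.
    pose proof (circ_low rho z th ltac:(lra)). fold d0 in H.
    pose proof (near_low rho z w th Hr Hz Hw). fold d0 in H0.
    apply div_le_bound.
    + split; [apply Rmult_le_pos; [apply Cmod_ge_0|apply pow_le, Cmod_ge_0]|].
      apply Rmult_le_compat_r; [apply pow_le, Cmod_ge_0|]. apply HM; auto.
    + split; auto. apply Rmult_le_compat; try lra; [apply pow_le; lra|]. apply pow_incr. lra.
  - right. field. lra.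
Qed.

Lemma K_cd2 rho u z : 0 < rho -> (forall t, rcont u t) -> Cmod z < rho -> cd (Kint rho u 2) z (2 * Kint rho u 3 z)%C.
Proof.
  intros Hr Hu Hz. destruct (u_bound u Hu) as [M [HM0 HM]].
  set (d0 := rho - Cmod z). assert (Hd0 : 0 < d0) by (unfold d0; lra).
  assert (Hd0r : d0 <= rho) by (unfold d0; pose proof (Cmod_ge_0 z); lra).
  assert (Hpos : 0 < d0 ^ 3 * (d0 / 2) ^ 2) by (apply Rmult_lt_0_compat; apply pow_lt; lra).
  apply cd_quad with (r0 := d0 / 2) (C0 := 2 * PI * (M * (8 * rho) / (d0 ^ 3 * (d0 / 2) ^ 2))); [lra| |].
  { apply Rmult_le_pos; [apply Rlt_le, PI2_pos|]. apply Rmult_le_pos; [nra|]. apply Rlt_le, Rinv_0_lt_compat; auto. }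
  intros w Hw. assert (Hw' : Cmod w < rho) by (apply (near_in rho z w); auto).
  replace (Kint rho u 2 w - Kint rho u 2 z - 2 * Kint rho u 3 z * (w - z))%C
    with (Kint rho u 2 w - Kint rho u 2 z - Kint rho u 3 z * (2 * (w - z)))%C by ring.
  rewrite (Kdiff rho u 2 (2 * (w - z)) z w) by auto.
  eapply Rle_trans; [apply Int_bound with (M := M * Cmod (w - z) ^ 2 * (8 * rho) / (d0 ^ 3 * (d0 / 2) ^ 2))|].
  - apply Rlt_le, PI2_pos.
  - apply exI_minus; [apply exI_minus|apply exI_Cmult]; apply exI_kernel; auto.
  - intros th Hth.
    assert (Ha : (RtoC rho * E th - z)%C <> RtoC 0) by (apply circ_ne; auto).
    assert (Hb : (RtoC rho * E th - w)%C <> RtoC 0) by (apply circ_ne; auto).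
    replace (w - z)%C with ((RtoC rho * E th - z) - (RtoC rho * E th - w))%C by ring.
    rewrite id2 by auto.
    replace ((RtoC rho * E th - z) - (RtoC rho * E th - w))%C with (w - z)%C by ring.
    rewrite Cmod_div by (apply Cmult_neq_0; apply Cpow_neq0; auto).
    rewrite !Cmod_mult, !Cmod_pow.
    pose proof (circ_low rho z th ltac:(lra)). fold d0 in H.
    pose proof (near_low rho z w th Hr Hz Hw). fold d0 in H0.
    assert (H3 : Cmod (3 * (RtoC rho * E th - z) - 2 * (w - z)) <= 8 * rho).
    { eapply Rle_trans; [apply Cmod_sub|]. rewrite !Cmod_mult.
      assert (Cmod (RtoC rho * E th - z) <= 2 * rho).
      { eapply Rle_trans; [apply Cmod_sub|]. rewrite Cmod_mult, Cmod_R, Cmod_E, Rabs_right by lra. lra. }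
      replace (Cmod 3) with 3 by (symmetry; rewrite Cmod_R, Rabs_right; lra).
      replace (Cmod 2) with 2 by (symmetry; rewrite Cmod_R, Rabs_right; lra). lra. }
    apply div_le_bound.
    + pose proof (pow_le (Cmod (w - z)) 2 (Cmod_ge_0 _)). pose proof (Cmod_ge_0 (u th)).
      pose proof (Cmod_ge_0 (3 * (RtoC rho * E th - z) - 2 * (w - z))).
      split; [apply Rmult_le_pos; [apply Rmult_le_pos|]; auto|].
      apply Rmult_le_compat; try apply Cmod_ge_0; [apply Rmult_le_pos; [apply Cmod_ge_0|apply pow_le, Cmod_ge_0]| |auto].
      apply Rmult_le_compat_r; [apply pow_le, Cmod_ge_0|]. apply HM; auto.
    + split; auto. apply Rmult_le_compat; try lra; try (apply pow_le; lra); apply pow_incr; lra.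
  - right. field. lra.
Qed.


Lemma Cminus_0_r (x : C) : (x - RtoC 0)%C = x.
Proof. ring. Qed.

Lemma rd_lin (w : C) t : rd (fun s => RtoC s * w)%C t w.
Proof. eapply rd_eq. apply rd_ext with (fun s => w * RtoC s)%C; [intros; ring|]. apply rd_scal, rd_id. ring. Qed.

Lemma taylor2 (f f' : C -> C) (a2 : C) :
  (forall w, Cmod w < 1 -> cd f w (f' w)) -> f (RtoC 0) = RtoC 0 -> f' (RtoC 0) = RtoC 1 ->
  cd f' (RtoC 0) (2 * a2)%C ->
  forall eta, 0 < eta -> exists del, 0 < del /\ del <= 1 /\ forall w, Cmod w < del ->
    Cmod (f w - w - a2 * (w * w))%C <= eta * (Cmod w * Cmod w).
Proof.
  intros Hf H0 H1 H2 eta Heta. destruct (H2 eta Heta) as [d [Hd W]].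
  exists (Rmin d 1). split; [apply Rmin_pos; lra|]. split; [apply Rmin_r|]. intros w Hw.
  assert (Hw1 : Cmod w < 1) by (eapply Rlt_le_trans; [exact Hw|apply Rmin_r]).
  assert (Hwd : Cmod w < d) by (eapply Rlt_le_trans; [exact Hw|apply Rmin_l]).
  set (p := fun t : R => (f (RtoC t * w) - RtoC t * w - a2 * ((RtoC t * w) * (RtoC t * w)))%C).
  set (dp := fun t : R => ((f' (RtoC t * w) - 1 - 2 * a2 * (RtoC t * w)) * w)%C).
  assert (Htw : forall t, 0 <= t <= 1 -> Cmod (RtoC t * w) <= Cmod w).
  { intros t Ht. rewrite Cmod_mult, Cmod_R, Rabs_right by lra. pose proof (Cmod_ge_0 w). nra. }
  pose proof (mvi p dp 0 1 (eta * (Cmod w * Cmod w)) ltac:(lra)) as M.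
  assert (E1 : p 1 = (f w - w - a2 * (w * w))%C) by (unfold p; rewrite Cmult_1_l; reflexivity).
  assert (E0 : p 0 = RtoC 0) by (unfold p; rewrite Cmult_0_l, H0; ring).
  rewrite E1, E0, Rminus_0_r, Rmult_1_r in M. rewrite Cminus_0_r in M. apply M.
  - intros t Ht. unfold p, dp. eapply rd_eq.
    + apply rd_minus; [apply rd_minus|].
      * apply (rd_comp f (fun s => RtoC s * w)%C); [apply Hf; specialize (Htw t Ht); lra|apply rd_lin].
      * apply rd_lin.
      * apply (rd_comp (fun v => a2 * (v * v))%C (fun s => RtoC s * w)%C); [|apply rd_lin].
        apply cd_scal. apply cd_mult; apply cd_id.
    + cbv beta. ring.
  - intros t Ht. unfold dp. rewrite Cmod_mult.
    specialize (Htw t Ht).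
    assert (Hv : Cmod (RtoC t * w - RtoC 0) < d) by (rewrite Cminus_0_r; lra).
    specialize (W _ Hv). rewrite H1, Cminus_0_r in W.
    pose proof (Cmod_ge_0 w).
    rewrite <- Rmult_assoc. apply Rmult_le_compat_r; [lra|]. eapply Rle_trans; [exact W|]. apply Rmult_le_compat_l; lra.
Qed.

Definition gfun (f : C -> C) (w : C) : C := if Ceq_dec w (RtoC 0) then RtoC 1 else (w / f w)%C.
Definition g'fun (f f' : C -> C) (a2 : C) (w : C) : C :=
  if Ceq_dec w (RtoC 0) then (- a2)%C else ((f w - w * f' w) / (f w * f w))%C.

Lemma gfun_nz f w : w <> RtoC 0 -> gfun f w = (w / f w)%C.
Proof. intros H. unfold gfun. destruct (Ceq_dec w 0); [contradiction|auto]. Qed.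

Lemma gfun_0 f : gfun f (RtoC 0) = RtoC 1.
Proof. unfold gfun. destruct (Ceq_dec 0 0); [auto|contradiction]. Qed.

Lemma g_cd0 (f f' : C -> C) (a2 : C) :
  (forall w, Cmod w < 1 -> cd f w (f' w)) -> f (RtoC 0) = RtoC 0 -> f' (RtoC 0) = RtoC 1 ->
  cd f' (RtoC 0) (2 * a2)%C -> cd (gfun f) (RtoC 0) (- a2)%C.
Proof.
  intros Hf H0 H1 H2 eps Heps.
  set (A := Cmod a2 + 1). assert (HA : 1 <= A) by (unfold A; pose proof (Cmod_ge_0 a2); lra).
  set (eta := Rmin 1 (eps / 4)). assert (Heta : 0 < eta) by (apply Rmin_pos; lra).
  assert (Heta1 : eta <= 1) by apply Rmin_l. assert (Heta2 : eta <= eps / 4) by apply Rmin_r.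
  destruct (taylor2 f f' a2 Hf H0 H1 H2 eta Heta) as [del [Hdel [Hdel1 W]]].
  exists (Rmin del (Rmin (1 / (2 * A)) (eps / (4 * (A * A))))). split.
  { repeat apply Rmin_pos; auto; apply Rdiv_lt_0_compat; nra. }
  intros w Hw. rewrite Cminus_0_r in Hw |- *.
  assert (Hw1 : Cmod w < del) by (eapply Rlt_le_trans; [exact Hw|apply Rmin_l]).
  assert (Hw2 : Cmod w <= 1 / (2 * A)) by (eapply Rle_trans; [left; exact Hw|]; eapply Rle_trans; [apply Rmin_r|apply Rmin_l]).
  assert (Hw3 : Cmod w <= eps / (4 * (A * A))) by (eapply Rle_trans; [left; exact Hw|]; eapply Rle_trans; [apply Rmin_r|apply Rmin_r]).
  rewrite gfun_0. pose proof (Cmod_ge_0 w) as Hw0.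
  destruct (Ceq_dec w 0) as [Z|Z].
  { subst. rewrite gfun_0. replace (1 - 1 - - a2 * 0)%C with (RtoC 0) by ring. rewrite Cmod_0. pose proof (Cmod_ge_0 (RtoC 0)). nra. }
  rewrite gfun_nz by auto.
  assert (Hwp : 0 < Cmod w) by (apply Cmod_gt_0; auto).
  specialize (W w Hw1).
  set (e := (f w - w - a2 * (w * w))%C) in W.
  assert (Ef : f w = (w + a2 * (w * w) + e)%C) by (unfold e; ring).
  assert (HAw : A * Cmod w <= 1 / 2).
  { apply (Rmult_le_compat_l A) in Hw2; [|lra]. replace (A * (1 / (2 * A))) with (1/2) in Hw2 by (field; lra). lra. }
  assert (Hfw : Cmod w / 2 <= Cmod (f w)).
  { rewrite Ef. pose proof (Cmod_rev_tri w (- (a2 * (w * w) + e))).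
    replace (w - - (a2 * (w * w) + e))%C with (w + a2 * (w * w) + e)%C in H by ring.
    rewrite Cmod_opp in H. pose proof (Cmod_triangle (a2 * (w * w)) e).
    rewrite !Cmod_mult in H3.
    assert (Cmod a2 * (Cmod w * Cmod w) + eta * (Cmod w * Cmod w) <= A * Cmod w * Cmod w) by (unfold A; nra).
    nra. }
  assert (Hfn : f w <> RtoC 0) by (intro X; rewrite X, Cmod_0 in Hfw; lra).
  replace (w / f w - 1 - - a2 * w)%C with ((- e + a2 * a2 * (w * w * w) + a2 * w * e) / f w)%C
    by (rewrite Ef; rewrite Ef in Hfn; field; auto).
  rewrite Cmod_div by auto.
  assert (Hnum : Cmod (- e + a2 * a2 * (w * w * w) + a2 * w * e) <= Cmod w * Cmod w * (eta + A * A * Cmod w)).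
  { eapply Rle_trans; [apply Cmod_tri3|]. rewrite Cmod_opp, !Cmod_mult.
    pose proof (Cmod_ge_0 a2). pose proof (Cmod_ge_0 e).
    assert (Cmod a2 * Cmod a2 + Cmod a2 * eta <= A * A) by (unfold A; nra).
    assert (Cmod a2 * Cmod w * Cmod e <= Cmod a2 * Cmod w * (eta * (Cmod w * Cmod w))) by (apply Rmult_le_compat_l; nra).
    assert (X3 : 0 <= Cmod w * Cmod w * Cmod w) by (repeat apply Rmult_le_pos; lra).
    assert ((Cmod w * Cmod w * Cmod w) * (Cmod a2 * Cmod a2 + Cmod a2 * eta) <= (Cmod w * Cmod w * Cmod w) * (A * A)) by (apply Rmult_le_compat_l; lra).
    assert (Cmod a2 * Cmod a2 * (Cmod w * Cmod w * Cmod w) + Cmod a2 * Cmod w * (eta * (Cmod w * Cmod w)) = (Cmod w * Cmod w * Cmod w) * (Cmod a2 * Cmod a2 + Cmod a2 * eta)) by ring.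
    assert (Cmod w * Cmod w * (eta + A * A * Cmod w) = eta * (Cmod w * Cmod w) + (Cmod w * Cmod w * Cmod w) * (A * A)) by ring.
    lra. }
  apply Rle_div_l; [lra|].
  assert (A * A * Cmod w <= eps / 4).
  { apply (Rmult_le_compat_l (A * A)) in Hw3; [|nra]. replace (A * A * (eps / (4 * (A * A)))) with (eps / 4) in Hw3 by (field; lra). lra. }
  assert (Cmod w * Cmod w * (eta + A * A * Cmod w) <= Cmod w * Cmod w * (eps / 2)) by (apply Rmult_le_compat_l; nra).
  assert (eps * Cmod w * (Cmod w / 2) <= eps * Cmod w * Cmod (f w)) by (apply Rmult_le_compat_l; nra).
  nra.
Qed.

Lemma g_cd (f f' : C -> C) (a2 : C) :
  (forall w, Cmod w < 1 -> cd f w (f' w)) -> f (RtoC 0) = RtoC 0 -> f' (RtoC 0) = RtoC 1 ->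
  cd f' (RtoC 0) (2 * a2)%C -> (forall w, Cmod w < 1 -> w <> RtoC 0 -> f w <> RtoC 0) ->
  forall w, Cmod w < 1 -> cd (gfun f) w (g'fun f f' a2 w).
Proof.
  intros Hf H0 H1 H2 Hnz w Hw. unfold g'fun. destruct (Ceq_dec w 0) as [Z|Z].
  - subst. apply g_cd0 with f'; auto.
  - assert (Hwp : 0 < Cmod w) by (apply Cmod_gt_0; auto).
    apply cd_ext_loc with (F := fun v => (v * / f v)%C) (r := Cmod w); auto.
    + intros v Hv. rewrite gfun_nz; [reflexivity|]. intro X. subst. rewrite Cmod_minus_sym, Cminus_0_r in Hv. lra.
    + eapply cd_eq. apply cd_mult; [apply cd_id|]. apply cd_inv; [apply Hnz; auto|apply Hf; auto].
      cbv beta. field. apply Hnz; auto.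
Qed.


Lemma rcont_circ (Phi : C -> C) (rho : R) t : ccont Phi (RtoC rho * E t)%C -> rcont (fun th => Phi (RtoC rho * E th))%C t.
Proof. intros H. apply rcont_comp with (p := fun th => (RtoC rho * E th)%C); auto. eapply rd_rcont. apply rd_scal, rd_E. Qed.

Lemma circ_nz (rho : R) t : 0 < rho -> (RtoC rho * E t)%C <> RtoC 0.
Proof. intros H X. assert (Cmod (RtoC rho * E t) = 0) by (rewrite X; apply Cmod_0).
  rewrite Cmod_mult, Cmod_R, Cmod_E, Rabs_right in H0; lra. Qed.

Lemma Cmod_circ (rho : R) t : 0 <= rho -> Cmod (RtoC rho * E t) = rho.
Proof. intros H. rewrite Cmod_mult, Cmod_R, Cmod_E, Rabs_right; lra. Qed.

Lemma twopii_nz : (RtoC (2 * PI) * Ci)%C <> RtoC 0.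
Proof. intro X. assert (Cmod (RtoC (2 * PI) * Ci) = 0) by (rewrite X; apply Cmod_0).
  rewrite Cmod_mult, Cmod_R, Cmod_Ci, Rabs_right in H; pose proof PI2_pos; lra. Qed.

Definition fHyp (f f' : C -> C) (a2 : C) : Prop :=
  (forall w, Cmod w < 1 -> cd f w (f' w)) /\ f (RtoC 0) = RtoC 0 /\ f' (RtoC 0) = RtoC 1 /\
  cd f' (RtoC 0) (2 * a2)%C /\ (forall w, Cmod w < 1 -> w <> RtoC 0 -> f w <> RtoC 0).

Definition Fm1 f (w : C) : C := (gfun f w - 1)%C.
Definition vv f (rho : R) (th : R) : C := (Fm1 f (RtoC rho * E th) * (Ci * (RtoC rho * E th)))%C.
Definition uu f (rho : R) (th : R) : C := (Fm1 f (RtoC rho * E th) / (RtoC rho * E th) * (Ci * (RtoC rho * E th)))%C.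

Lemma Fm1_cd f f' a2 : fHyp f f' a2 -> forall w, Cmod w < 1 -> cd (Fm1 f) w (g'fun f f' a2 w).
Proof.
  intros (H1&H2&H3&H4&H5) w Hw. unfold Fm1. eapply cd_eq.
  - apply cd_minus; [apply (g_cd f f' a2); auto|apply cd_const].
  - ring.
Qed.

Lemma rcont_vv f f' a2 rho : fHyp f f' a2 -> 0 < rho < 1 -> forall t, rcont (vv f rho) t.
Proof.
  intros Hf Hr t. unfold vv. apply rcont_mult.
  - apply rcont_circ. eapply cd_ccont. apply (Fm1_cd f f' a2); auto. rewrite Cmod_circ; lra.
  - apply rcont_mult; [apply rcont_const|]. eapply rd_rcont. apply rd_scal, rd_E.
Qed.

Lemma rcont_uu f f' a2 rho : fHyp f f' a2 -> 0 < rho < 1 -> forall t, rcont (uu f rho) t.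
Proof.
  intros Hf Hr t. unfold uu, Cdiv. apply rcont_mult; [apply rcont_mult|].
  - apply rcont_circ. eapply cd_ccont. apply (Fm1_cd f f' a2); auto. rewrite Cmod_circ; lra.
  - apply rcont_circ with (Phi := fun w => (/ w)%C). eapply cd_ccont. apply cd_Cinv. apply circ_nz; lra.
  - apply rcont_mult; [apply rcont_const|]. eapply rd_rcont. apply rd_scal, rd_E.
Qed.

Lemma cauchy_g f f' a2 rho z : fHyp f f' a2 -> 0 < rho < 1 -> Cmod z < rho ->
  Kint rho (vv f rho) 1 z = (RtoC (2 * PI) * Ci * (gfun f z - 1))%C.
Proof.
  intros Hf Hr Hz.
  change (gfun f z - 1)%C with (Fm1 f z). rewrite <- (cauchy (Fm1 f) (g'fun f f' a2) 1 rho z) by (try apply (Fm1_cd f f' a2); auto; lra).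
  unfold Kint, CI. apply Int_ext; [apply Rlt_le, PI2_pos|]. intros th _. unfold vv.
  assert (Hne : (RtoC rho * E th - z)%C <> RtoC 0) by (apply circ_ne; lra).
  field. auto.
Qed.

Lemma Hh_val f f' a2 rho z : fHyp f f' a2 -> 0 < rho < 1 -> Cmod z < rho -> z <> RtoC 0 ->
  Kint rho (uu f rho) 1 z = (RtoC (2 * PI) * Ci * (gfun f z - 1) / z)%C.
Proof.
  intros Hf Hr Hz Hz0.
  assert (H0 : Cmod (RtoC 0) < rho) by (rewrite Cmod_0; lra).
  assert (E0 : Kint rho (vv f rho) 1 (RtoC 0) = RtoC 0) by (rewrite (cauchy_g f f' a2) by auto; rewrite gfun_0; ring).
  replace (RtoC (2 * PI) * Ci * (gfun f z - 1) / z)%C with (/ z * (Kint rho (vv f rho) 1 z - Kint rho (vv f rho) 1 (RtoC 0)))%C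
    by (rewrite E0, (cauchy_g f f' a2) by auto; field; auto).
  unfold Kint.
  set (f1 := fun th => (vv f rho th / (RtoC rho * E th - z) ^ 1)%C).
  set (f2 := fun th => (vv f rho th / (RtoC rho * E th - RtoC 0) ^ 1)%C).
  assert (E1 : exI f1 0 (2 * PI)) by (apply exI_kernel; try lra; apply (rcont_vv f f' a2); auto).
  assert (E2 : exI f2 0 (2 * PI)) by (apply exI_kernel; try lra; apply (rcont_vv f f' a2); auto).
  change (Int (fun th => uu f rho th / (RtoC rho * E th - z) ^ 1)%C 0 (2 * PI) = / z * (Int f1 0 (2 * PI) - Int f2 0 (2 * PI)))%C.
  rewrite <- (Int_minus f1 f2) by auto.
  rewrite <- (Int_Cmult (/ z) (fun th => f1 th - f2 th)%C) by (apply exI_minus; auto).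
  apply Int_ext; [apply Rlt_le, PI2_pos|]. intros th _. unfold f1, f2, uu, vv.
  assert (Hne : (RtoC rho * E th - z)%C <> RtoC 0) by (apply circ_ne; lra).
  assert (Hg : (RtoC rho * E th)%C <> RtoC 0) by (apply circ_nz; lra).
  rewrite Cminus_0_r. field. split; [apply E_neq0|]. split; [intro X; injection X; lra|]. auto.
Qed.

Lemma Hh_0 f f' a2 rho : fHyp f f' a2 -> 0 < rho < 1 ->
  Kint rho (uu f rho) 1 (RtoC 0) = (RtoC (2 * PI) * Ci * (- a2))%C.
Proof.
  intros Hf Hr.
  assert (H0 : Cmod (RtoC 0) < rho) by (rewrite Cmod_0; lra).
  assert (Eq : Kint rho (uu f rho) 1 (RtoC 0) = Kint rho (vv f rho) 2 (RtoC 0)).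
  { unfold Kint. apply Int_ext; [apply Rlt_le, PI2_pos|]. intros th _. unfold uu, vv. rewrite Cminus_0_r.
    assert (Hg : (RtoC rho * E th)%C <> RtoC 0) by (apply circ_nz; lra). field. repeat split; try apply E_neq0; try (intro X; injection X; lra); auto. }
  rewrite Eq. apply (cd_unique (Kint rho (vv f rho) 1) (RtoC 0)).
  - apply K_cd1; auto; [lra|]. apply (rcont_vv f f' a2); auto.
  - apply cd_ext_loc with (F := fun w => (RtoC (2 * PI) * Ci * (gfun f w - 1))%C) (r := rho); [lra| |].
    + intros w Hw. rewrite Cminus_0_r in Hw. symmetry. apply (cauchy_g f f' a2); auto.
    + replace (- a2)%C with (g'fun f f' a2 (RtoC 0)).
      2:{ unfold g'fun. destruct (Ceq_dec 0 0); [auto|contradiction]. }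
      apply cd_scal. apply (Fm1_cd f f' a2); auto. rewrite Cmod_0; lra.
Qed.


Ltac cnz := repeat split; try assumption; try (let X := fresh in intro X; injection X; intros; pose proof PI_RGT_0; lra); try apply E_neq0.

Definition kap : C := (/ (RtoC (2 * PI) * Ci))%C.
Definition Hh f rho z : C := (kap * Kint rho (uu f rho) 1 z)%C.
Definition H1 f rho z : C := (kap * Kint rho (uu f rho) 2 z)%C.
Definition H2 f rho z : C := (kap * (2 * Kint rho (uu f rho) 3 z))%C.

Lemma Hh_cd f f' a2 rho z : fHyp f f' a2 -> 0 < rho < 1 -> Cmod z < rho -> cd (Hh f rho) z (H1 f rho z).
Proof. intros. unfold Hh, H1. apply cd_scal. apply K_cd1; [lra| |auto]. apply (rcont_uu f f' a2); auto. Qed.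

Lemma H1_cd f f' a2 rho z : fHyp f f' a2 -> 0 < rho < 1 -> Cmod z < rho -> cd (H1 f rho) z (H2 f rho z).
Proof. intros. unfold H2, H1. apply cd_scal. apply K_cd2; [lra| |auto]. apply (rcont_uu f f' a2); auto. Qed.

Lemma Hh_eq f f' a2 rho z : fHyp f f' a2 -> 0 < rho < 1 -> Cmod z < rho -> z <> RtoC 0 ->
  Hh f rho z = ((gfun f z - 1) / z)%C.
Proof. intros. unfold Hh, kap. rewrite (Hh_val f f' a2) by auto. pose proof twopii_nz. field. cnz. Qed.

Lemma Hh_at0 f f' a2 rho : fHyp f f' a2 -> 0 < rho < 1 -> Hh f rho (RtoC 0) = (- a2)%C.
Proof. intros. unfold Hh, kap. rewrite (Hh_0 f f' a2) by auto. pose proof twopii_nz. field. cnz. Qed.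

Lemma H1_eq f f' a2 rho z : fHyp f f' a2 -> 0 < rho < 1 -> Cmod z < rho -> z <> RtoC 0 ->
  H1 f rho z = (- U_f f f' z / (z * z))%C.
Proof.
  intros Hf Hr Hz Hz0. pose proof Hf as (Hd&_&_&_&Hnz).
  assert (Hzp : 0 < Cmod z) by (apply Cmod_gt_0; auto).
  assert (Hfz : f z <> RtoC 0) by (apply Hnz; auto; lra).
  apply (cd_unique (Hh f rho) z).
  - apply (Hh_cd f f' a2); auto.
  - apply cd_ext_loc with (F := fun v => ((v * / f v - 1) * / v)%C) (r := Rmin (Cmod z) (rho - Cmod z)).
    + apply Rmin_pos; lra.
    + intros v Hv. assert (Hv1 : Cmod (v - z) < Cmod z) by (eapply Rlt_le_trans; [exact Hv|apply Rmin_l]).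
      assert (Hv2 : Cmod (v - z) < rho - Cmod z) by (eapply Rlt_le_trans; [exact Hv|apply Rmin_r]).
      assert (Hv0 : v <> RtoC 0) by (intro X; subst; rewrite Cmod_minus_sym, Cminus_0_r in Hv1; lra).
      assert (Hvr : Cmod v < rho) by (replace v with (v - z + z)%C by ring; eapply Rle_lt_trans; [apply Cmod_triangle|]; lra).
      rewrite (Hh_eq f f' a2) by auto. rewrite gfun_nz by auto. reflexivity.
    + eapply cd_eq.
      * apply cd_mult; [apply cd_minus; [apply cd_mult; [apply cd_id|apply cd_inv; [auto|apply Hd; lra]]|apply cd_const]|].
        apply cd_Cinv; auto.
      * cbv beta. unfold U_f, Cdiv. simpl. field. auto.
Qed.

Lemma pow_trick (x B K : R) : 0 <= x -> 0 <= B -> 0 < K -> (forall n, x ^ n <= K * B ^ n) -> x <= B.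
Proof.
  intros Hx HB HK H. destruct (Rle_dec x B) as [L|L]; auto. exfalso.
  destruct (Req_dec B 0) as [Z|Z].
  - subst. specialize (H 1%nat). simpl in H. lra.
  - assert (HB' : 0 < B) by lra.
    destruct (Pow_x_infinity (x / B) ltac:(rewrite Rabs_right; [apply (Rmult_lt_reg_r B); [auto|]; unfold Rdiv; rewrite Rmult_assoc, Rinv_l; lra|apply Rle_ge, Rlt_le, Rdiv_lt_0_compat; lra]) (K + 1)) as [N HN].
    specialize (HN N (le_n N)). specialize (H N).
    rewrite Rabs_right in HN by (apply Rle_ge, pow_le, Rlt_le, Rdiv_lt_0_compat; lra).
    unfold Rdiv in HN. rewrite Rpow_mult_distr, pow_inv in HN.
    assert (0 < B ^ N) by (apply pow_lt; auto).
    apply (Rmult_ge_compat_r (B ^ N)) in HN; [|lra]. rewrite Rmult_assoc, Rinv_l in HN by lra. nra.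
Qed.

Lemma max_bound f f' a2 (lam rho rho1 : R) z : fHyp f f' a2 -> 0 < rho1 -> rho1 < rho -> rho < 1 -> 0 < lam ->
  (forall w, Cmod w < 1 -> w <> RtoC 0 -> Cmod (U_f f f' w) < lam) -> Cmod z < rho1 ->
  Cmod (H1 f rho z) <= lam / rho1 ^ 2.
Proof.
  intros Hf H1r H2r H3r Hlam HU Hz.
  assert (Hrr : 0 < rho < 1) by lra.
  pose proof (Cmod_ge_0 z) as Hz0.
  apply (pow_trick _ _ (rho1 / (rho1 - Cmod z))); [apply Cmod_ge_0| apply Rlt_le, Rdiv_lt_0_compat; [lra|apply pow_lt; lra]| apply Rdiv_lt_0_compat; lra|].
  intros n.
  set (Fn := fun w => (H1 f rho w ^ n)%C).
  assert (HFn : forall w, Cmod w < rho -> cd Fn w (INR n * H1 f rho w ^ pred n * H2 f rho w)%C).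
  { intros w Hw. unfold Fn. apply cd_pow. apply (H1_cd f f' a2); auto. }
  pose proof (cauchy Fn _ rho rho1 z HFn H1r H2r Hz) as Hc.
  assert (Hcb : Cmod (CI rho1 (fun w => Fn w / (w - z))%C) <= (2 * PI - 0) * ((lam / rho1 ^ 2) ^ n / (rho1 - Cmod z) * rho1)).
  { unfold CI. apply Int_bound; [apply Rlt_le, PI2_pos| |].
    - apply exI_rcont; [apply Rlt_le, PI2_pos|]. intros th _. apply rcont_mult.
      + apply rcont_circ with (Phi := fun w => (Fn w / (w - z))%C). eapply cd_ccont. unfold Cdiv. apply cd_mult.
        * apply HFn. rewrite Cmod_circ; lra.
        * apply (cd_inv (fun w => w - z)%C); [apply circ_ne; lra|]. apply cd_minus; [apply cd_id|apply cd_const].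
      + apply rcont_mult; [apply rcont_const|]. eapply rd_rcont. apply rd_scal, rd_E.
    - intros th _. set (w := (RtoC rho1 * E th)%C).
      assert (Hw : Cmod w = rho1) by (apply Cmod_circ; lra).
      assert (Hw0 : w <> RtoC 0) by (apply circ_nz; lra).
      assert (Hwz : rho1 - Cmod z <= Cmod (w - z)) by (apply circ_low; lra).
      rewrite Cmod_mult, Cmod_div by (apply circ_ne; lra). rewrite Cmod_mult, Cmod_Ci, Hw, Rmult_1_l.
      unfold Fn. rewrite Cmod_pow.
      assert (HH : Cmod (H1 f rho w) <= lam / rho1 ^ 2).
      { rewrite (H1_eq f f' a2) by (auto; lra). rewrite Cmod_div by (apply Cmult_neq_0; auto).
        rewrite Cmod_opp, Cmod_mult, Hw. replace (rho1 * rho1) with (rho1 ^ 2) by ring.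
        apply Rmult_le_compat_r; [apply Rlt_le, Rinv_0_lt_compat, pow_lt; lra|]. left. apply HU; auto; lra. }
      apply Rmult_le_compat_r; [lra|]. apply div_le_bound; [|lra].
      split; [apply pow_le, Cmod_ge_0|]. apply pow_incr. split; [apply Cmod_ge_0|auto]. }
  rewrite Hc in Hcb. unfold Fn in Hcb. rewrite !Cmod_mult, Cmod_R, Cmod_Ci, Rabs_right, Cmod_pow in Hcb by (apply Rle_ge, Rlt_le, PI2_pos).
  pose proof PI2_pos.
  assert (E1 : (2 * PI - 0) * ((lam / rho1 ^ 2) ^ n / (rho1 - Cmod z) * rho1) = 2 * PI * (rho1 / (rho1 - Cmod z) * (lam / rho1 ^ 2) ^ n)) by (field; lra).
  rewrite E1, Rmult_1_r in Hcb. apply Rmult_le_reg_l with (2 * PI); auto.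
Qed.


Lemma main_fhyp (lambda : R) (f f' : C -> C) (a2 mu : C) :
  fHyp f f' a2 -> 0 < lambda <= 1 ->
  (forall w, Cmod w < 1 -> w <> RtoC 0 -> Cmod (U_f f f' w) < lambda) ->
  Cmod mu <= 1 - lambda -> (a2 + mu)%C <> RtoC 0 ->
  ~ (exists z : C, Cmod z < 1 /\ f z = Copp (Cinv (Cplus a2 mu))).
Proof.
  intros Hf Hlam HU Hmu Hs [z0 [Hz0 Ef]].
  pose proof Hf as (Hd&Hf0&_&_&Hnz).
  assert (Hinv : Cinv (a2 + mu) <> RtoC 0).
  { intro X. assert (Cmod (/ (a2 + mu)) = 0) by (rewrite X; apply Cmod_0).
    rewrite Cmod_inv in H by auto. pose proof (Cmod_gt_0 (a2 + mu)). apply H0 in Hs.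
    apply Rinv_neq_0_compat in H; [auto|lra]. }
  assert (Hz00 : z0 <> RtoC 0).
  { intro X. subst. rewrite Hf0 in Ef. apply Hinv. replace (/ (a2 + mu))%C with (- (- / (a2 + mu)))%C by ring. rewrite <- Ef. ring. }
  set (r := Cmod z0). assert (Hr : 0 < r) by (apply Cmod_gt_0; auto). assert (Hr1 : r < 1) by exact Hz0.
  set (D := 1 - (1 - lambda) * r).
  assert (HD : 0 < D) by (unfold D; nra).
  set (c := lambda * r ^ 2 / D).
  assert (Hc0 : 0 < c) by (unfold c; apply Rdiv_lt_0_compat; [apply Rmult_lt_0_compat; [lra|apply pow_lt; lra]|auto]).
  assert (Hc1 : c < 1).
  { unfold c. apply Rlt_div_l; auto. unfold D. assert (0 <= lambda * r * (1 - r)) by (apply Rmult_le_pos; [apply Rmult_le_pos|]; lra). simpl. nra. }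
  set (m := Rmax r c).
  assert (Hm1 : m < 1) by (unfold m; apply Rmax_lub_lt; lra).
  assert (Hmr : r <= m) by apply Rmax_l. assert (Hmc : c <= m) by apply Rmax_r.
  set (rho1 := (1 + m) / 2). set (rho := (1 + rho1) / 2).
  assert (Hrr1 : r < rho1) by (unfold rho1; lra).
  assert (Hr2 : rho1 < rho) by (unfold rho, rho1; lra).
  assert (Hr3 : rho < 1) by (unfold rho, rho1; lra).
  assert (Hcr : c < rho1 ^ 2) by (unfold rho1; simpl; nra).
  assert (Hrr : 0 < rho < 1) by lra.
  assert (Ez0 : Hh f rho z0 = ((- z0 * (a2 + mu) - 1) / z0)%C).
  { rewrite (Hh_eq f f' a2) by (auto; fold r; lra). rewrite gfun_nz by auto. rewrite Ef.
    f_equal. field. repeat split; auto. }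
  assert (E0 : Hh f rho (RtoC 0) = (- a2)%C) by (apply (Hh_at0 f f' a2); auto).
  assert (Htz : forall t, 0 <= t <= 1 -> Cmod (RtoC t * z0) <= r).
  { intros t Ht. rewrite Cmod_mult, Cmod_R, Rabs_right by lra. fold r. nra. }
  pose proof (mvi (fun t => Hh f rho (RtoC t * z0)) (fun t => (H1 f rho (RtoC t * z0) * z0)%C) 0 1
    (lambda / rho1 ^ 2 * r) ltac:(lra)) as Mv.
  cbv beta in Mv. rewrite Cmult_1_l, Cmult_0_l, Ez0, E0, Rminus_0_r, Rmult_1_r in Mv.
  assert (Hmv : Cmod ((- z0 * (a2 + mu) - 1) / z0 - - a2) <= lambda / rho1 ^ 2 * r).
  { apply Mv.
    - intros t Ht. apply (rd_comp (Hh f rho) (fun s => RtoC s * z0)%C).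
      + apply (Hh_cd f f' a2); auto. specialize (Htz t Ht). lra.
      + apply rd_lin.
    - intros t Ht. rewrite Cmod_mult. fold r. apply Rmult_le_compat_r; [lra|].
      apply (max_bound f f' a2 lambda rho rho1); auto; try lra. specialize (Htz t Ht). lra. }
  replace ((- z0 * (a2 + mu) - 1) / z0 - - a2)%C with (- (1 + mu * z0) / z0)%C in Hmv by (field; auto).
  rewrite Cmod_div, Cmod_opp in Hmv by auto. fold r in Hmv.
  assert (Hmv' : Cmod (1 + mu * z0) <= lambda / rho1 ^ 2 * r * r).
  { replace (Cmod (1 + mu * z0)) with (Cmod (1 + mu * z0) / r * r) by (field; lra).
    apply Rmult_le_compat_r; lra. }
  assert (Hlow : D <= Cmod (1 + mu * z0)).
  { pose proof (Cmod_rev_tri 1 (- (mu * z0))). replace (1 - - (mu * z0))%C with (1 + mu * z0)%C in H by ring.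
    rewrite Cmod_opp, Cmod_mult, Cmod_1 in H. fold r in H. unfold D. nra. }
  assert (Hup : lambda / rho1 ^ 2 * r * r < D).
  { assert (0 < rho1 ^ 2) by (apply pow_lt; lra).
    assert (Ecd : lambda * r ^ 2 = c * D) by (unfold c; field; lra).
    replace (lambda / rho1 ^ 2 * r * r) with (c * D / rho1 ^ 2) by (rewrite <- Ecd; field; lra).
    apply Rlt_div_l; auto. nra. }
  lra.
Qed.

Theorem corollary1p2 (lambda : R) (f f' : C -> C) (a2 mu : C) :
  0 < lambda <= 1 ->
  classU lambda f f' ->
  @is_derive C_AbsRing C_NormedModule f' (RtoC 0) (Cmult (RtoC 2) a2) ->
  Cmod mu <= 1 - lambda ->
  Cplus a2 mu <> RtoC 0 ->
  ~ (exists z : C, in_disk z /\ f z = Copp (Cinv (Cplus a2 mu))).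
Proof.
  intros Hlam [[Hd [Hf0 Hf'0]] [Hnz HU]] Hd2 Hmu Hs.
  apply (main_fhyp lambda f f' a2 mu); auto.
  split; [|split; [auto|split; [auto|split]]].
  - intros w Hw. apply is_derive_cd. apply Hd. exact Hw.
  - apply is_derive_cd. exact Hd2.
  - intros w Hw Hw0. apply Hnz; auto.
Qed.
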